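(* Let $p>1$ and $\gamma=\frac{p-2}{2(p-1)}$. For $\alpha>0$, let $\phi$ be the maximal solution, on $[0,R_{\max})$ with $R_{\max}=R_{\max}(\alpha)\in(0,\infty]$, of $$\phi''=\tfrac12 y\phi'-\gamma\phi-|\phi'|^p\ (y>0),\qquad \phi(0)=0,\quad \phi'(0)=\alpha.$$ There exists $\alpha_0>0$ such that for every $\alpha\in(0,\alpha_0)$: $R_{\max}=\infty$, $\phi>0$ and $\phi'>0$ on $(0,\infty)$, and there exists $\bar R>0$ such that $\phi''<0$ on $[0,\bar R)$ and $\phi''>0$ on $(\bar R,\infty)$. *)

(* Defs.v *)
From Stdlib Require Import Reals Lra.
From Coquelicot Require Import Coquelicot.
Open Scope R_scope.

(* |x|^p for real p > 0, with the convention 0^p = 0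
   (Stdlib's Rpower 0 p would be exp (p * ln 0) = 1, which is wrong). *)
Definition abspow (x p : R) : R :=
  if Req_EM_T x 0 then 0 else Rpower (Rabs x) p.

Definition gam (p : R) : R := (p - 2) / (2 * (p - 1)).

Definition ode_rhs (p : R) (phi dphi : R -> R) (y : R) : R :=
  / 2 * y * dphi y - gam p * phi y - abspow (dphi y) p.

Definition right_deriv (f : R -> R) (x l : R) : Prop :=
  filterlim (fun y => (f y - f x) / (y - x)) (at_right x) (locally l).

(* (phi, dphi) is a solution on [0, Rm) of the initial value problem
   phi'' = y/2 phi' - gamma phi - |phi'|^p (y > 0), phi(0) = 0, phi'(0) = alpha.
   dphi is the derivative phi'; derivatives at 0 are right derivatives,
   and phi'' is given by ode_rhs (including at 0, as a right derivative). *)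
Definition is_sol (p alpha : R) (Rm : Rbar) (phi dphi : R -> R) : Prop :=
  Rbar_lt 0 Rm /\
  phi 0 = 0 /\ dphi 0 = alpha /\
  right_deriv phi 0 (dphi 0) /\
  right_deriv dphi 0 (ode_rhs p phi dphi 0) /\
  (forall y, 0 < y -> Rbar_lt y Rm ->
     is_derive phi y (dphi y) /\ is_derive dphi y (ode_rhs p phi dphi y)).

Definition is_max_sol (p alpha : R) (Rm : Rbar) (phi dphi : R -> R) : Prop :=
  is_sol p alpha Rm phi dphi /\
  ~ (exists (R' : Rbar) (psi dpsi : R -> R),
        Rbar_lt Rm R' /\ is_sol p alpha R' psi dpsi /\
        (forall y, 0 <= y -> Rbar_lt y Rm -> psi y = phi y)).

(* Main.v *)
Require Import Defs.
From Stdlib Require Import Reals Lra Lia Classical.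
From Coquelicot Require Import Coquelicot.
Open Scope R_scope.


Lemma cont_eps f x : continuity_pt f x -> forall eps, 0 < eps ->
  exists d, 0 < d /\ forall y, Rabs (y - x) < d -> Rabs (f y - f x) < eps.
Proof.
  intros H eps He. destruct (H eps He) as [d [Hd H']].
  exists d; split; [lra|]. intros y Hy.
  destruct (Req_dec y x) as [->|Hne].
  - rewrite Rminus_eq_0, Rabs_R0; lra.
  - apply (H' y). split; [split; [exact I| auto]| exact Hy].
Qed.

Lemma eps_cont f x : (forall eps, 0 < eps ->
  exists d, 0 < d /\ forall y, Rabs (y - x) < d -> Rabs (f y - f x) < eps) ->
  continuity_pt f x.
Proof.
  intros H eps He. destruct (H eps He) as [d [Hd H']].
  exists d; split; [lra|]. intros y [_ Hy]. apply H'. exact Hy.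
Qed.

Lemma first_hit f a b L : a < b -> (forall x, a <= x <= b -> continuity_pt f x) ->
  L < f a -> f b <= L ->
  exists s, a < s <= b /\ f s = L /\ forall t, a <= t < s -> L < f t.
Proof.
  intros Hab Hc Ha Hb.
  set (E := fun x => a <= x <= b /\ forall t, a <= t <= x -> L < f t).
  assert (HB : bound E) by (exists b; intros x [Hx _]; lra).
  assert (HE : exists x, E x).
  { exists a. split; [lra|]. intros t Ht. replace t with a by lra. exact Ha. }
  destruct (completeness E HB HE) as [m [Hub Hlub]].
  assert (Ham : a <= m) by (apply Hub; split; [lra| intros t Ht; replace t with a by lra; exact Ha]).
  assert (Hmb : m <= b) by (apply Hlub; intros x [Hx _]; lra).
  assert (C1 : forall t, a <= t < m -> L < f t).
  { intros t Ht. destruct (Rlt_le_dec L (f t)) as [h|h]; auto.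
    exfalso. assert (m <= t); [|lra]. apply Hlub. intros x [Hx Hx'].
    destruct (Rle_lt_dec x t) as [h'|h']; auto.
    specialize (Hx' t ltac:(lra)). lra. }
  assert (C2 : f m <= L).
  { destruct (Rle_lt_dec (f m) L) as [h|h]; auto. exfalso.
    destruct (Req_dec m b) as [Heq|Hne]. { subst m; lra. }
    destruct (cont_eps f m (Hc m ltac:(lra)) (f m - L) ltac:(lra)) as [d [Hd Hd']].
    set (x' := Rmin (m + d/2) b).
    assert (Hx'm : m < x') by (unfold x', Rmin; destruct Rle_dec; lra).
    assert (E x').
    { split. unfold x', Rmin; destruct Rle_dec; lra.
      intros t Ht. destruct (Rlt_le_dec t m) as [h1|h1]. apply C1; lra.
      assert (Rabs (t - m) < d). { unfold x', Rmin in Ht; destruct Rle_dec; apply Rabs_def1; lra. }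
      specialize (Hd' t H). apply Rabs_def2 in Hd'. lra. }
    specialize (Hub x' H). lra. }
  assert (C3 : L <= f m).
  { destruct (Rle_lt_dec L (f m)) as [h|h]; auto. exfalso.
    assert (Hma : a < m). { destruct (Req_dec a m) as [<-|]; lra. }
    destruct (cont_eps f m (Hc m ltac:(lra)) (L - f m) ltac:(lra)) as [d [Hd Hd']].
    set (t := Rmax a (m - d/2)).
    assert (Ht1 : a <= t < m) by (unfold t, Rmax; destruct Rle_dec; lra).
    assert (Rabs (t - m) < d) by (unfold t, Rmax in *; destruct Rle_dec; apply Rabs_def1; lra).
    specialize (Hd' t H). apply Rabs_def2 in Hd'. specialize (C1 t Ht1). lra. }
  exists m. split; [|split; [lra| exact C1]].
  split; auto. destruct (Req_dec a m) as [<-|]; lra.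
Qed.

Lemma quot_sign x hh : hh <> 0 -> x / hh * hh = x.
Proof. intros; field; auto. Qed.

Lemma deriv_left_sign f s d a : derivable_pt_lim f s d -> a < s ->
  (forall t, a <= t < s -> f s < f t) -> d <= 0.
Proof.
  intros Hd Has Ht. destruct (Rle_lt_dec d 0) as [h|h]; auto. exfalso.
  destruct (Hd d h) as [del Hdel].
  set (hh := - Rmin (del/2) ((s - a)/2)).
  assert (Hdp := cond_pos del).
  assert (Hh1 : hh < 0) by (unfold hh, Rmin; destruct Rle_dec; lra).
  assert (Hh2 : Rabs hh < del) by (unfold hh, Rmin; destruct Rle_dec; rewrite Rabs_left; lra).
  specialize (Hdel hh ltac:(lra) Hh2).
  assert (f s < f (s + hh)) by (apply Ht; unfold hh, Rmin; destruct Rle_dec; lra).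
  apply Rabs_def2 in Hdel. destruct Hdel as [_ Hdel].
  assert (Q := quot_sign (f (s + hh) - f s) hh ltac:(lra)).
  set (q := (f (s + hh) - f s) / hh) in *. nra.
Qed.

Lemma deriv_right_pos f s d : derivable_pt_lim f s d -> 0 < d ->
  exists e, 0 < e /\ forall t, s < t < s + e -> f s < f t.
Proof.
  intros Hd h. destruct (Hd d h) as [del Hdel].
  exists del. split. apply cond_pos. intros t Ht.
  specialize (Hdel (t - s) ltac:(lra)).
  replace (s + (t - s)) with t in Hdel by ring.
  assert (Rabs (t - s) < del) by (rewrite Rabs_right; lra).
  specialize (Hdel H). apply Rabs_def2 in Hdel.
  assert (Q := quot_sign (f t - f s) (t - s) ltac:(lra)).
  set (q := (f t - f s) / (t - s)) in *. nra.
Qed.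

Lemma mvt_lb f df a b m : a <= b -> (forall x, a < x < b -> is_derive f x (df x)) ->
  (forall x, a <= x <= b -> continuity_pt f x) -> (forall x, a <= x <= b -> m <= df x) ->
  f a + m * (b - a) <= f b.
Proof.
  intros Hab Hd Hc Hm.
  destruct (MVT_gen f a b df) as [c [Hc1 Hc2]].
  - intros x Hx. apply Hd. rewrite Rmin_left, Rmax_right in Hx; lra.
  - intros x Hx. apply Hc. rewrite Rmin_left, Rmax_right in Hx; lra.
  - rewrite Rmin_left, Rmax_right in Hc1 by lra. specialize (Hm c Hc1). nra.
Qed.

Lemma mvt_ub f df a b m : a <= b -> (forall x, a < x < b -> is_derive f x (df x)) ->
  (forall x, a <= x <= b -> continuity_pt f x) -> (forall x, a <= x <= b -> df x <= m) ->
  f b <= f a + m * (b - a).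
Proof.
  intros Hab Hd Hc Hm.
  destruct (MVT_gen f a b df) as [c [Hc1 Hc2]].
  - intros x Hx. apply Hd. rewrite Rmin_left, Rmax_right in Hx; lra.
  - intros x Hx. apply Hc. rewrite Rmin_left, Rmax_right in Hx; lra.
  - rewrite Rmin_left, Rmax_right in Hc1 by lra. specialize (Hm c Hc1). nra.
Qed.


Lemma Rpower_1l y : Rpower 1 y = 1.
Proof. unfold Rpower. rewrite ln_1, Rmult_0_r, exp_0. reflexivity. Qed.

Lemma abspow_pos u p : 0 < u -> abspow u p = Rpower u p.
Proof.
  intros h. unfold abspow. destruct (Req_EM_T u 0); [lra|]. rewrite Rabs_right; lra.
Qed.

Lemma abspow_opp u p : abspow (- u) p = abspow u p.
Proof.
  unfold abspow. destruct (Req_EM_T (-u) 0), (Req_EM_T u 0); try lra.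
  rewrite Rabs_Ropp; reflexivity.
Qed.

Lemma abspow_nonneg u p : 0 <= abspow u p.
Proof. unfold abspow. destruct Req_EM_T; [lra|]. unfold Rpower. left; apply exp_pos. Qed.

Lemma Rpower_pos x y : 0 < Rpower x y.
Proof. unfold Rpower; apply exp_pos. Qed.

Lemma Rpower_small x p : 1 <= p -> 0 < x <= 1 -> Rpower x p <= x.
Proof.
  intros hp hx. replace p with (1 + (p - 1)) by ring. rewrite Rpower_plus, Rpower_1 by lra.
  assert (Rpower x (p - 1) <= 1).
  { assert (Rpower x (p-1) <= Rpower 1 (p-1)) by (apply Rle_Rpower_l; lra).
    rewrite Rpower_1l in H; exact H. }
  assert (0 < Rpower x (p-1)) by apply Rpower_pos. nra.
Qed.

Lemma is_derive_Rpower x p : 0 < x -> is_derive (fun u => Rpower u p) x (p * Rpower x (p - 1)).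
Proof. intros h. apply is_derive_Reals. apply derivable_pt_lim_power; auto. Qed.

Lemma is_derive_abspow u p : 0 < u -> is_derive (fun u => abspow u p) u (p * Rpower u (p - 1)).
Proof.
  intros h. apply is_derive_ext_loc with (fun u => Rpower u p); [|apply is_derive_Rpower; auto].
  assert (0 < u) by auto. exists (mkposreal u h). intros y Hy. simpl in Hy.
  unfold ball in Hy; simpl in Hy; unfold AbsRing_ball, abs, minus, plus, opp in Hy; simpl in Hy.
  apply Rabs_def2 in Hy. symmetry. apply abspow_pos. lra.
Qed.

Lemma derive_cont f x l : is_derive f x l -> continuity_pt f x.
Proof.
  intros H. apply is_derive_Reals in H. apply derivable_continuous_pt. exists l. exact H.
Qed.

Lemma abspow_cont_pos u p : 0 < u -> continuity_pt (fun u => abspow u p) u.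
Proof. intros h. eapply derive_cont. apply is_derive_abspow; auto. Qed.

Lemma abspow_cont u p : 1 <= p -> continuity_pt (fun u => abspow u p) u.
Proof.
  intros hp. destruct (Rtotal_order u 0) as [h|[h|h]].
  - assert (Hc : continuity_pt (comp (fun u => abspow u p) (fun u => - u)) u).
    { apply continuity_pt_comp. apply continuity_pt_opp, continuity_pt_id.
      apply abspow_cont_pos. lra. }
    intros eps He. destruct (Hc eps He) as [d [Hd H']]. exists d; split; auto.
    intros x Hx. specialize (H' x Hx). unfold comp in H'. rewrite !abspow_opp in H'. exact H'.
  - subst u. apply eps_cont. intros eps He. exists (Rmin eps 1). split.
    { apply Rmin_pos; lra. }
    intros y Hy. rewrite Rminus_0_r in Hy.
    assert (abspow 0 p = 0) by (unfold abspow; destruct Req_EM_T; lra). rewrite H.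
    unfold abspow. destruct Req_EM_T. rewrite Rminus_0_r, Rabs_R0; lra.
    rewrite Rminus_0_r, Rabs_right by (left; apply Rpower_pos).
    assert (Rabs y < eps /\ Rabs y < 1) by (unfold Rmin in Hy; destruct Rle_dec; lra).
    assert (0 < Rabs y) by (apply Rabs_pos_lt; auto).
    assert (Rpower (Rabs y) p <= Rabs y) by (apply Rpower_small; lra). lra.
  - apply abspow_cont_pos; auto.
Qed.


Lemma locally_R x r (P : R -> Prop) : 0 < r -> (forall y, Rabs (y - x) < r -> P y) -> locally x P.
Proof. intros hr H. exists (mkposreal r hr). intros y Hy. apply H. exact Hy. Qed.

Lemma cpt_cont f x : continuity_pt f x -> continuous f x.
Proof. intros H. apply continuity_pt_filterlim. exact H. Qed.

Lemma ex_RInt_seg k a t : (forall s, Rmin a t <= s <= Rmax a t -> continuity_pt k s) -> ex_RInt k a t.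
Proof. intros H. apply (ex_RInt_continuous (V:=R_CompleteNormedModule)). intros z Hz. apply cpt_cont, H, Hz. Qed.

Lemma RInt_bound k a t M : ex_RInt k a t ->
  (forall s, Rmin a t <= s <= Rmax a t -> Rabs (k s) <= M) -> Rabs (RInt k a t) <= Rabs (t - a) * M.
Proof.
  intros He Hb. destruct (Rle_lt_dec a t) as [h|h].
  - rewrite (Rabs_right (t - a)) by lra. apply abs_RInt_le_const; [lra|auto|].
    intros s Hs. apply Hb. rewrite Rmin_left, Rmax_right; lra.
  - rewrite (Rabs_left (t - a)) by lra. rewrite <- opp_RInt_swap by (apply ex_RInt_swap; auto).
    change (opp (RInt k t a)) with (- RInt k t a). rewrite Rabs_Ropp.
    replace (- (t - a)) with (a - t) by ring.
    apply abs_RInt_le_const; [lra| apply ex_RInt_swap; auto|].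
    intros s Hs. apply Hb. rewrite Rmin_right, Rmax_left; lra.
Qed.

Lemma RInt_minusR k1 k2 a b : ex_RInt k1 a b -> ex_RInt k2 a b ->
  RInt (fun s => k1 s - k2 s) a b = RInt k1 a b - RInt k2 a b.
Proof. intros H1 H2. apply (RInt_minus k1 k2 a b H1 H2). Qed.

Lemma RInt_derive_loc k a t r : 0 < r -> (forall s, Rabs (s - t) < r -> continuity_pt k s) ->
  (forall b, Rabs (b - t) < r -> ex_RInt k a b) ->
  is_derive (fun s => RInt k a s) t (k t).
Proof.
  intros hr Hc He. apply (is_derive_RInt k (fun s => RInt k a s) a t).
  - apply locally_R with r; auto. intros y Hy. apply (RInt_correct (V:=R_CompleteNormedModule)), He, Hy.
  - apply cpt_cont, Hc. rewrite Rminus_eq_0, Rabs_R0; lra.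
Qed.

Lemma is_derive_plus_const A k t l : is_derive k t l -> is_derive (fun s => A + k s) t l.
Proof.
  intros H. assert (H' := is_derive_plus (fun _ => A) k t zero l (is_derive_const A t) H).
  replace l with (plus zero l). exact H'. unfold plus, zero; simpl. ring.
Qed.

Lemma geom_to0 C : forall eps, 0 < eps -> exists N : nat, forall n, (N <= n)%nat -> C * (/2)^n < eps.
Proof.
  intros eps He. assert (Hq : Rabs (/2) < 1) by (rewrite Rabs_right; lra).
  destruct (pow_lt_1_zero (/2) Hq (eps / (Rabs C + 1))) as [N HN].
  { apply Rdiv_lt_0_compat; [lra| assert (0 <= Rabs C) by apply Rabs_pos; lra]. }
  exists N. intros n Hn. specialize (HN n Hn).
  assert (Hp : 0 < (/2)^n) by (apply pow_lt; lra).
  rewrite Rabs_right in HN by lra.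
  assert (0 <= Rabs C) by apply Rabs_pos.
  assert ((/2)^n * (Rabs C + 1) < eps).
  { apply Rlt_div_r in HN; [|lra]. lra. }
  assert (C <= Rabs C) by apply Rle_abs. nra.
Qed.

Lemma lim_geom u l C : (forall n, Rabs (u n - l) <= C * (/2)^n) -> is_lim_seq u l.
Proof.
  intros H. apply is_lim_seq_Reals. intros eps He.
  destruct (geom_to0 C eps He) as [N HN]. exists N. intros n Hn.
  unfold R_dist. specialize (H n). specialize (HN n Hn). lra.
Qed.


Fixpoint pic (F : R -> R -> R -> R) (x0 A B : R) (n : nat) : (R -> R) * (R -> R) :=
  match n with
  | O => (fun _ => A, fun _ => B)
  | S m => let fg := pic F x0 A B m in
      (fun t => A + RInt (snd fg) x0 t,
       fun t => B + RInt (fun s => F s (fst fg s) (snd fg s)) x0 t)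
  end.

Definition fn F x0 A B n := fst (pic F x0 A B n).
Definition gn F x0 A B n := snd (pic F x0 A B n).

Lemma fn_S F x0 A B n t : fn F x0 A B (S n) t = A + RInt (gn F x0 A B n) x0 t.
Proof. reflexivity. Qed.
Lemma gn_S F x0 A B n t : gn F x0 A B (S n) t =
  B + RInt (fun s => F s (fn F x0 A B n s) (gn F x0 A B n s)) x0 t.
Proof. reflexivity. Qed.
Lemma fn_0 F x0 A B t : fn F x0 A B O t = A. Proof. reflexivity. Qed.
Lemma gn_0 F x0 A B t : gn F x0 A B O t = B. Proof. reflexivity. Qed.

Definition Fcont (F : R -> R -> R -> R) := forall (f g : R -> R) t,
  continuity_pt f t -> continuity_pt g t -> continuity_pt (fun s => F s (f s) (g s)) t.

Lemma const_cont (c x : R) : continuity_pt (fun _ => c) x.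
Proof. apply continuity_pt_const. intros ? ?; reflexivity. Qed.

Lemma pic_cont F x0 A B : Fcont F -> forall n s,
  continuity_pt (fn F x0 A B n) s /\ continuity_pt (gn F x0 A B n) s.
Proof.
  intros HF n. induction n as [|n IH]; intros s.
  - unfold fn, gn; simpl; split; apply const_cont.
  - split.
    + apply (derive_cont _ s (gn F x0 A B n s)).
      apply (is_derive_ext (fun t => A + RInt (gn F x0 A B n) x0 t)); [intros; reflexivity|].
      apply is_derive_plus_const.
      apply (RInt_derive_loc (gn F x0 A B n) x0 s 1); [lra| intros; apply IH | intros; apply ex_RInt_seg; intros; apply IH].
    + apply (derive_cont _ s (F s (fn F x0 A B n s) (gn F x0 A B n s))).
      apply (is_derive_ext (fun t => B + RInt (fun s => F s (fn F x0 A B n s) (gn F x0 A B n s)) x0 t));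
        [intros; reflexivity|].
      apply is_derive_plus_const.
      apply (RInt_derive_loc (fun s => F s (fn F x0 A B n s) (gn F x0 A B n s)) x0 s 1); [lra| intros; apply HF; apply IH | intros; apply ex_RInt_seg; intros; apply HF; apply IH].
Qed.

Lemma seg_in x0 t s : Rmin x0 t <= s <= Rmax x0 t -> Rabs (s - x0) <= Rabs (t - x0).
Proof.
  intros H. unfold Rmin, Rmax in H. destruct Rle_dec.
  - rewrite !Rabs_right; lra.
  - rewrite !Rabs_left1; lra.
Qed.

Lemma addK (a b : R) : a + b - a = b. Proof. ring. Qed.
Lemma addK2 (a b c : R) : a + b - (a + c) = b - c. Proof. ring. Qed.

Lemma abs_int s x0 r : Rabs (s - x0) <= r -> x0 - r <= s <= x0 + r.
Proof. unfold Rabs; destruct Rcase_abs; lra. Qed.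

Lemma pic_diff F x0 A B L MF h :
  Fcont F -> 0 <= L -> 0 < h -> 2 * h <= 1 -> 2 * h * (1 + L) <= /2 ->
  (forall s a b a' b', x0 - 1 <= s <= x0 + 1 ->
     Rabs (F s a b - F s a' b') <= L * (Rabs (a - a') + Rabs (b - b'))) ->
  (forall s, x0 - 1 <= s <= x0 + 1 -> Rabs (F s A B) <= MF) ->
  forall n t, Rabs (t - x0) <= 2 * h ->
  Rabs (fn F x0 A B (S n) t - fn F x0 A B n t) + Rabs (gn F x0 A B (S n) t - gn F x0 A B n t)
    <= 2 * h * (Rabs B + MF) * (/2)^n.
Proof.
  intros HF HL0 Hh Hh1 Hh2 HL HM.
  assert (HMF : 0 <= MF) by (assert (H := HM x0 ltac:(lra)); assert (0 <= Rabs (F x0 A B)) by apply Rabs_pos; lra).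
  assert (HC := pic_cont F x0 A B HF).
  induction n as [|n IH]; intros t Ht.
  - rewrite fn_S, gn_S, fn_0, gn_0. simpl pow. rewrite Rmult_1_r.
    rewrite !addK.
    assert (H1 : Rabs (RInt (gn F x0 A B 0) x0 t) <= Rabs (t - x0) * Rabs B).
    { apply RInt_bound. apply ex_RInt_seg; intros; apply HC.
      intros s _. rewrite gn_0. lra. }
    assert (H2 : Rabs (RInt (fun s => F s (fn F x0 A B 0 s) (gn F x0 A B 0 s)) x0 t) <= Rabs (t - x0) * MF).
    { apply RInt_bound. apply ex_RInt_seg; intros; apply HF; apply HC.
      intros s Hs. rewrite fn_0, gn_0. apply HM. apply seg_in in Hs.
      apply abs_int. lra. }
    assert (0 <= Rabs (t - x0)) by apply Rabs_pos.
    assert (0 <= Rabs B) by apply Rabs_pos.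
    nra.
  - rewrite (fn_S F x0 A B (S n) t), (fn_S F x0 A B n t), (gn_S F x0 A B (S n) t), (gn_S F x0 A B n t).
    rewrite !addK2.
    set (M0 := 2 * h * (Rabs B + MF)) in *.
    assert (Hs1 : forall s, Rmin x0 t <= s <= Rmax x0 t -> Rabs (s - x0) <= 2 * h).
    { intros s Hs. apply seg_in in Hs. lra. }
    rewrite <- RInt_minusR by (apply ex_RInt_seg; intros; apply HC).
    rewrite <- RInt_minusR by (apply ex_RInt_seg; intros; apply HF; apply HC).
    assert (H1 : Rabs (RInt (fun s => gn F x0 A B (S n) s - gn F x0 A B n s) x0 t) <= Rabs (t - x0) * (M0 * (/2)^n)).
    { apply RInt_bound.
      - apply ex_RInt_seg; intros. apply continuity_pt_minus; apply HC.
      - intros s Hs. specialize (IH s (Hs1 s Hs)).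
        assert (0 <= Rabs (fn F x0 A B (S n) s - fn F x0 A B n s)) by apply Rabs_pos. lra. }
    assert (H2 : Rabs (RInt (fun s => F s (fn F x0 A B (S n) s) (gn F x0 A B (S n) s) - F s (fn F x0 A B n s) (gn F x0 A B n s)) x0 t) <= Rabs (t - x0) * (L * (M0 * (/2)^n))).
    { apply RInt_bound.
      - apply ex_RInt_seg; intros. apply continuity_pt_minus; apply HF; apply HC.
      - intros s Hs. specialize (IH s (Hs1 s Hs)).
        eapply Rle_trans. apply HL. apply abs_int. specialize (Hs1 s Hs). lra.
        apply Rmult_le_compat_l; lra. }
    assert (0 <= Rabs (t - x0)) by apply Rabs_pos.
    assert (0 < (/2)^n) by (apply pow_lt; lra).
    assert (0 <= M0) by (unfold M0; assert (0 <= Rabs B) by apply Rabs_pos; assert (0 <= MF) by lra; nra).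
    simpl pow.
    assert (Rabs (t - x0) * (1 + L) * (M0 * (/2)^n) <= 2 * h * (1 + L) * (M0 * (/2)^n)).
    { apply Rmult_le_compat_r. nra. apply Rmult_le_compat_r; lra. }
    assert (2 * h * (1 + L) * (M0 * (/2)^n) <= /2 * (M0 * (/2)^n)).
    { apply Rmult_le_compat_r. nra. lra. }
    lra.
Qed.

Definition PicHyp F x0 A B L MF h := Fcont F /\ 0 <= L /\ 0 < h /\ 2 * h <= 1 /\ 2 * h * (1 + L) <= /2 /\
  (forall s a b a' b', x0 - 1 <= s <= x0 + 1 ->
     Rabs (F s a b - F s a' b') <= L * (Rabs (a - a') + Rabs (b - b'))) /\
  (forall s, x0 - 1 <= s <= x0 + 1 -> Rabs (F s A B) <= MF).

Lemma pic_M0 F x0 A B L MF h : PicHyp F x0 A B L MF h -> 0 <= 2 * h * (Rabs B + MF).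
Proof.
  intros (HF & HL0 & Hh & Hh1 & Hh2 & HL & HM).
  assert (H := HM x0 ltac:(lra)); assert (0 <= Rabs (F x0 A B)) by apply Rabs_pos.
  assert (0 <= Rabs B) by apply Rabs_pos. nra.
Qed.

Lemma pic_cauchy F x0 A B L MF h : PicHyp F x0 A B L MF h ->
  forall n k t, Rabs (t - x0) <= 2 * h ->
  Rabs (fn F x0 A B (n + k) t - fn F x0 A B n t) <= 2 * (2 * h * (Rabs B + MF)) * ((/2)^n - (/2)^(n+k)) /\
  Rabs (gn F x0 A B (n + k) t - gn F x0 A B n t) <= 2 * (2 * h * (Rabs B + MF)) * ((/2)^n - (/2)^(n+k)).
Proof.
  intros H. assert (HM0 := pic_M0 _ _ _ _ _ _ _ H).
  destruct H as (HF & HL0 & Hh & Hh1 & Hh2 & HL & HM).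
  set (M0 := 2 * h * (Rabs B + MF)) in *.
  intros n k t Ht. induction k as [|k IH].
  - rewrite Nat.add_0_r, !Rminus_eq_0, Rabs_R0. lra.
  - replace (n + S k)%nat with (S (n + k)) by lia.
    assert (D := pic_diff F x0 A B L MF h HF HL0 Hh Hh1 Hh2 HL HM (n + k) t Ht).
    fold M0 in D. simpl pow.
    assert (0 <= Rabs (fn F x0 A B (S (n + k)) t - fn F x0 A B (n + k) t)) by apply Rabs_pos.
    assert (0 <= Rabs (gn F x0 A B (S (n + k)) t - gn F x0 A B (n + k) t)) by apply Rabs_pos.
    destruct IH as [IH1 IH2].
    split.
    + eapply Rle_trans. 
      replace (fn F x0 A B (S (n + k)) t - fn F x0 A B n t) with
        ((fn F x0 A B (S (n + k)) t - fn F x0 A B (n + k) t) + (fn F x0 A B (n + k) t - fn F x0 A B n t)) by ring.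
      apply Rabs_triang. lra.
    + eapply Rle_trans. 
      replace (gn F x0 A B (S (n + k)) t - gn F x0 A B n t) with
        ((gn F x0 A B (S (n + k)) t - gn F x0 A B (n + k) t) + (gn F x0 A B (n + k) t - gn F x0 A B n t)) by ring.
      apply Rabs_triang. lra.
Qed.

Definition plim (u : nat -> R) : R := real (Lim_seq u).
Definition fl F x0 A B t := plim (fun n => fn F x0 A B n t).
Definition gl F x0 A B t := plim (fun n => gn F x0 A B n t).

Lemma plim_correct u : ex_finite_lim_seq u -> is_lim_seq u (plim u).
Proof.
  intros [l Hl]. unfold plim. rewrite (is_lim_seq_unique _ _ Hl). exact Hl.
Qed.

Lemma cauchy_geom (u : nat -> R) C : 0 <= C -> (forall n k, Rabs (u (n + k)%nat - u n) <= C * ((/2)^n - (/2)^(n+k))) ->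
  ex_finite_lim_seq u.
Proof.
  intros HC H. apply ex_lim_seq_cauchy_corr. intros eps.
  destruct (geom_to0 (2 * C) eps (cond_pos eps)) as [N HN]. exists N.
  intros n m Hn Hm. specialize (HN N (le_n N)).
  assert (G : forall k, Rabs (u (N + k)%nat - u N) <= C * (/2)^N).
  { intros k. eapply Rle_trans. apply H. apply Rmult_le_compat_l; auto.
    assert (0 < (/2)^(N+k)) by (apply pow_lt; lra). lra. }
  replace n with (N + (n - N))%nat by lia. replace m with (N + (m - N))%nat by lia.
  assert (G1 := G (n - N)%nat). assert (G2 := G (m - N)%nat).
  eapply Rle_lt_trans.
  replace (u (N + (n - N))%nat - u (N + (m - N))%nat) with
    ((u (N + (n - N))%nat - u N) - (u (N + (m - N))%nat - u N)) by ring.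
  apply Rabs_triang. rewrite Rabs_Ropp. lra.
Qed.

Lemma lim_bound (u : nat -> R) (l : R) n C : is_lim_seq u l -> (forall k, Rabs (u (k + n)%nat - u n) <= C) ->
  Rabs (l - u n) <= C.
Proof.
  intros Hl Hk. apply is_lim_seq_incr_n with (N := n) in Hl.
  assert (H1 : is_lim_seq (fun k => Rabs (u (k + n)%nat - u n)) (Rabs (l - u n))).
  { apply (is_lim_seq_abs (fun k => u (k + n)%nat - u n) (l - u n)).
    apply is_lim_seq_minus'; auto. apply is_lim_seq_const. }
  assert (H2 := is_lim_seq_le _ _ _ _ Hk H1 (is_lim_seq_const C)). exact H2.
Qed.

Lemma pic_lim F x0 A B L MF h : PicHyp F x0 A B L MF h -> forall t, Rabs (t - x0) <= 2 * h ->
  is_lim_seq (fun n => fn F x0 A B n t) (fl F x0 A B t) /\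
  is_lim_seq (fun n => gn F x0 A B n t) (gl F x0 A B t) /\
  forall n, Rabs (fl F x0 A B t - fn F x0 A B n t) <= 2 * (2 * h * (Rabs B + MF)) * (/2)^n /\
            Rabs (gl F x0 A B t - gn F x0 A B n t) <= 2 * (2 * h * (Rabs B + MF)) * (/2)^n.
Proof.
  intros H t Ht. assert (HM0 := pic_M0 _ _ _ _ _ _ _ H).
  assert (HC := pic_cauchy _ _ _ _ _ _ _ H).
  set (M0 := 2 * h * (Rabs B + MF)) in *.
  assert (L1 : is_lim_seq (fun n => fn F x0 A B n t) (fl F x0 A B t)).
  { apply plim_correct. apply cauchy_geom with (2 * M0). lra. intros n k. apply HC; auto. }
  assert (L2 : is_lim_seq (fun n => gn F x0 A B n t) (gl F x0 A B t)).
  { apply plim_correct. apply cauchy_geom with (2 * M0). lra. intros n k. apply HC; auto. }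
  split; auto. split; auto. intros n. split.
  - apply (lim_bound (fun n => fn F x0 A B n t)); auto. intros k.
    rewrite Nat.add_comm. eapply Rle_trans. apply HC; auto.
    apply Rmult_le_compat_l. lra. assert (0 < (/2)^(n+k)) by (apply pow_lt; lra). lra.
  - apply (lim_bound (fun n => gn F x0 A B n t)); auto. intros k.
    rewrite Nat.add_comm. eapply Rle_trans. apply HC; auto.
    apply Rmult_le_compat_l. lra. assert (0 < (/2)^(n+k)) by (apply pow_lt; lra). lra.
Qed.

Lemma unif_cont (f : R -> R) (fs : nat -> R -> R) t r C :
  0 < r -> (forall n s, continuity_pt (fs n) s) ->
  (forall n s, Rabs (s - t) < r -> Rabs (f s - fs n s) <= C * (/2)^n) ->
  continuity_pt f t.
Proof.
  intros Hr Hc Hb. apply eps_cont. intros eps He.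
  destruct (geom_to0 C (eps/3) ltac:(lra)) as [N HN]. specialize (HN N (le_n N)).
  destruct (cont_eps (fs N) t (Hc N t) (eps/3) ltac:(lra)) as [d [Hd Hd']].
  exists (Rmin d r). split. apply Rmin_pos; lra.
  intros y Hy. assert (Hy1 : Rabs (y - t) < d) by (eapply Rlt_le_trans; [apply Hy| apply Rmin_l]).
  assert (Hy2 : Rabs (y - t) < r) by (eapply Rlt_le_trans; [apply Hy| apply Rmin_r]).
  assert (B1 := Hb N y Hy2). assert (B2 := Hb N t ltac:(rewrite Rminus_eq_0, Rabs_R0; lra)).
  specialize (Hd' y Hy1).
  replace (f y - f t) with ((f y - fs N y) + (fs N y - fs N t) - (f t - fs N t)) by ring.
  eapply Rle_lt_trans. apply Rabs_triang. rewrite Rabs_Ropp.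
  eapply Rle_lt_trans. apply Rplus_le_compat_r. apply Rabs_triang. lra.
Qed.

Lemma pic_fg_cont F x0 A B L MF h : PicHyp F x0 A B L MF h -> forall t, Rabs (t - x0) < 2 * h ->
  continuity_pt (fl F x0 A B) t /\ continuity_pt (gl F x0 A B) t.
Proof.
  intros H t Ht. assert (HL := pic_lim _ _ _ _ _ _ _ H).
  assert (HC := pic_cont F x0 A B (proj1 H)).
  set (r := 2 * h - Rabs (t - x0)).
  assert (Hr : forall s, Rabs (s - t) < r -> Rabs (s - x0) <= 2 * h).
  { intros s Hs. unfold r in Hs.
    replace (s - x0) with ((s - t) + (t - x0)) by ring.
    eapply Rle_trans. apply Rabs_triang. lra. }
  split.
  - apply (unif_cont _ (fn F x0 A B) t r (2 * (2 * h * (Rabs B + MF)))).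
    unfold r; lra. intros; apply HC. intros n s Hs. apply (HL s (Hr s Hs)).
  - apply (unif_cont _ (gn F x0 A B) t r (2 * (2 * h * (Rabs B + MF)))).
    unfold r; lra. intros; apply HC. intros n s Hs. apply (HL s (Hr s Hs)).
Qed.

Lemma lim_uniq (u : nat -> R) (a b : R) : is_lim_seq u a -> is_lim_seq u b -> a = b.
Proof.
  intros H1 H2. apply is_lim_seq_unique in H1. apply is_lim_seq_unique in H2.
  rewrite H1 in H2. injection H2; auto.
Qed.

Lemma pic_inteq F x0 A B L MF h : PicHyp F x0 A B L MF h -> forall t, Rabs (t - x0) < 2 * h ->
  fl F x0 A B t = A + RInt (gl F x0 A B) x0 t /\
  gl F x0 A B t = B + RInt (fun s => F s (fl F x0 A B s) (gl F x0 A B s)) x0 t.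
Proof.
  intros H t Ht. assert (HL := pic_lim _ _ _ _ _ _ _ H).
  assert (HC := pic_cont F x0 A B (proj1 H)).
  assert (HFG := pic_fg_cont _ _ _ _ _ _ _ H).
  assert (HM0 := pic_M0 _ _ _ _ _ _ _ H).
  destruct H as (HF & HL0 & Hh & Hh1 & Hh2 & HLip & HM).
  set (M0 := 2 * h * (Rabs B + MF)) in *.
  assert (Hs1 : forall s, Rmin x0 t <= s <= Rmax x0 t -> Rabs (s - x0) < 2 * h).
  { intros s Hs. apply seg_in in Hs. lra. }
  assert (0 <= Rabs (t - x0)) by apply Rabs_pos.
  destruct (HL t ltac:(lra)) as [L1 [L2 _]].
  apply is_lim_seq_incr_n with (N := 1%nat) in L1.
  apply is_lim_seq_incr_n with (N := 1%nat) in L2.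
  split.
  - apply (lim_uniq _ _ _ L1). apply lim_geom with (Rabs (t - x0) * (2 * M0)).
    intros n. rewrite Nat.add_1_r, fn_S, addK2.
    rewrite <- RInt_minusR.
    + replace (Rabs (t - x0) * (2 * M0) * (/2)^n) with (Rabs (t - x0) * (2 * M0 * (/2)^n)) by ring.
      apply RInt_bound.
      * apply ex_RInt_seg; intros s Hs. apply continuity_pt_minus. apply HC. apply HFG; auto.
      * intros s Hs. rewrite <- Rabs_Ropp, Ropp_minus_distr. apply (HL s ltac:(specialize (Hs1 s Hs); lra)).
    + apply ex_RInt_seg; intros; apply HC.
    + apply ex_RInt_seg; intros; apply HFG; auto.
  - apply (lim_uniq _ _ _ L2). apply lim_geom with (Rabs (t - x0) * (L * (4 * M0))).
    intros n. rewrite Nat.add_1_r, gn_S, addK2.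
    rewrite <- RInt_minusR.
    + replace (Rabs (t - x0) * (L * (4 * M0)) * (/2)^n) with (Rabs (t - x0) * (L * (4 * M0) * (/2)^n)) by ring.
      apply RInt_bound.
      * apply ex_RInt_seg; intros s Hs. apply continuity_pt_minus. apply HF; apply HC.
        apply HF; apply HFG; auto.
      * intros s Hs. specialize (Hs1 s Hs). destruct (HL s ltac:(lra)) as [_ [_ Hb]].
        destruct (Hb n) as [Hb1 Hb2].
        eapply Rle_trans. apply HLip. apply abs_int; lra.
        rewrite <- (Rabs_Ropp (fn F x0 A B n s - fl F x0 A B s)), Ropp_minus_distr.
        rewrite <- (Rabs_Ropp (gn F x0 A B n s - gl F x0 A B s)), Ropp_minus_distr.
        assert (0 < (/2)^n) by (apply pow_lt; lra).
        assert (L * (Rabs (fl F x0 A B s - fn F x0 A B n s) + Rabs (gl F x0 A B s - gn F x0 A B n s)) <= L * (4 * M0 * (/2)^n)).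
        { apply Rmult_le_compat_l; lra. }
        lra.
    + apply ex_RInt_seg; intros; apply HF; apply HC.
    + apply ex_RInt_seg; intros; apply HF; apply HFG; auto.
Qed.

Lemma picard (F : R -> R -> R -> R) (x0 A B L MF : R) :
  Fcont F -> 0 <= L ->
  (forall s a b a' b', x0 - 1 <= s <= x0 + 1 ->
     Rabs (F s a b - F s a' b') <= L * (Rabs (a - a') + Rabs (b - b'))) ->
  (forall s, x0 - 1 <= s <= x0 + 1 -> Rabs (F s A B) <= MF) ->
  exists r (f g : R -> R), 0 < r /\ f x0 = A /\ g x0 = B /\
    forall t, Rabs (t - x0) < r -> is_derive f t (g t) /\ is_derive g t (F t (f t) (g t)).
Proof.
  intros HF HL0 HLip HM.
  set (h := Rmin (/2) (/ (4 * (1 + L)))).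
  assert (Hh : 0 < h) by (apply Rmin_pos; [lra| apply Rinv_0_lt_compat; lra]).
  assert (Hh1 : 2 * h <= 1) by (assert (h <= /2) by apply Rmin_l; lra).
  assert (Hh2 : 2 * h * (1 + L) <= /2).
  { assert (h <= / (4 * (1 + L))) by apply Rmin_r.
    assert (h * (4 * (1 + L)) <= 1).
    { apply (Rmult_le_compat_r (4 * (1 + L))) in H; [|lra]. rewrite Rinv_l in H; lra. }
    lra. }
  assert (H : PicHyp F x0 A B L MF h) by (repeat split; auto).
  assert (HFG := pic_fg_cont _ _ _ _ _ _ _ H).
  assert (HI := pic_inteq _ _ _ _ _ _ _ H).
  exists (2 * h), (fl F x0 A B), (gl F x0 A B). split; [lra|].
  assert (E0 : Rabs (x0 - x0) < 2 * h) by (rewrite Rminus_eq_0, Rabs_R0; lra).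
  split. { rewrite (proj1 (HI x0 E0)), RInt_point. unfold zero; simpl; ring. }
  split. { rewrite (proj2 (HI x0 E0)), RInt_point. unfold zero; simpl; ring. }
  intros t Ht. set (r := 2 * h - Rabs (t - x0)).
  assert (Hr : forall s, Rabs (s - t) < r -> Rabs (s - x0) < 2 * h).
  { intros s Hs. unfold r in Hs.
    replace (s - x0) with ((s - t) + (t - x0)) by ring.
    eapply Rle_lt_trans. apply Rabs_triang. lra. }
  assert (Hr0 : 0 < r) by (unfold r; lra).
  assert (Hseg : forall b s, Rabs (b - t) < r -> Rmin x0 b <= s <= Rmax x0 b -> Rabs (s - x0) < 2 * h).
  { intros b s Hb Hs. apply seg_in in Hs. specialize (Hr b Hb). lra. }
  split.
  - apply (is_derive_ext_loc (fun s => A + RInt (gl F x0 A B) x0 s)).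
    { apply locally_R with r; auto. intros y Hy. symmetry. apply (HI y (Hr y Hy)). }
    apply is_derive_plus_const. apply RInt_derive_loc with r; auto.
    + intros s Hs. apply HFG; auto.
    + intros b Hb. apply ex_RInt_seg. intros s Hs. apply HFG. apply (Hseg b s Hb Hs).
  - apply (is_derive_ext_loc (fun s => B + RInt (fun s => F s (fl F x0 A B s) (gl F x0 A B s)) x0 s)).
    { apply locally_R with r; auto. intros y Hy. symmetry. apply (HI y (Hr y Hy)). }
    apply is_derive_plus_const.
    apply (RInt_derive_loc (fun s => F s (fl F x0 A B s) (gl F x0 A B s)) x0 t r); auto.
    + intros s Hs. apply HF; apply HFG; auto.
    + intros b Hb. apply ex_RInt_seg. intros s Hs. apply HF; apply HFG; apply (Hseg b s Hb Hs).
Qed.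


Definition clamp (B x : R) := Rmax (B / 2) (Rmin x (2 * B)).

Lemma clamp_lip B x y : 0 < B -> Rabs (clamp B x - clamp B y) <= Rabs (x - y).
Proof.
  intros hB. unfold clamp, Rmax, Rmin.
  repeat destruct Rle_dec; unfold Rabs; repeat destruct Rcase_abs; lra.
Qed.

Lemma clamp_range B x : 0 < B -> B / 2 <= clamp B x <= 2 * B.
Proof. intros hB. unfold clamp, Rmax, Rmin. repeat destruct Rle_dec; lra. Qed.

Lemma clamp_id B x : 0 < B -> B / 2 <= x <= 2 * B -> clamp B x = x.
Proof. intros hB hx. unfold clamp, Rmax, Rmin. repeat destruct Rle_dec; lra. Qed.

Lemma lip_cont (f : R -> R) K x : (forall y, Rabs (f y - f x) <= K * Rabs (y - x)) -> continuity_pt f x.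
Proof.
  intros H. apply eps_cont. intros eps He. exists (eps / (Rabs K + 1)). split.
  { apply Rdiv_lt_0_compat; [lra| assert (0 <= Rabs K) by apply Rabs_pos; lra]. }
  intros y Hy. eapply Rle_lt_trans. apply H.
  assert (0 <= Rabs K) by apply Rabs_pos. assert (0 <= Rabs (y - x)) by apply Rabs_pos.
  assert (K <= Rabs K) by apply Rle_abs.
  assert (Rabs (y - x) * (Rabs K + 1) < eps).
  { apply Rlt_div_r in Hy; [|lra]. lra. }
  nra.
Qed.

Lemma Rpower_cont_pos x p : 0 < x -> continuity_pt (fun u => Rpower u p) x.
Proof. intros h. eapply derive_cont. apply is_derive_Rpower; auto. Qed.

Lemma Rpower_lip a b u w p : 0 < a -> 1 <= p -> a <= u <= b -> a <= w <= b ->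
  Rabs (Rpower u p - Rpower w p) <= p * Rpower b (p - 1) * Rabs (u - w).
Proof.
  intros ha hp hu hw.
  assert (Hd : forall x, a <= x <= b -> 0 <= p * Rpower x (p - 1) <= p * Rpower b (p - 1)).
  { intros x hx. assert (0 < Rpower x (p-1)) by apply Rpower_pos. split. nra.
    apply Rmult_le_compat_l; [lra|]. apply Rle_Rpower_l; lra. }
  assert (K : forall u w, a <= u <= w -> w <= b ->
     0 <= Rpower w p - Rpower u p <= p * Rpower b (p - 1) * (w - u)).
  { intros u0 w0 H1 H2.
    assert (Hder : forall x, u0 < x < w0 -> is_derive (fun u => Rpower u p) x (p * Rpower x (p - 1))).
    { intros; apply is_derive_Rpower; lra. }
    assert (Hc : forall x, u0 <= x <= w0 -> continuity_pt (fun u => Rpower u p) x).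
    { intros; apply Rpower_cont_pos; lra. }
    split.
    - assert (G := mvt_lb (fun u => Rpower u p) (fun x => p * Rpower x (p - 1)) u0 w0 0 ltac:(lra) Hder Hc
        ltac:(intros x hx; apply Hd; lra)). simpl in G. lra.
    - assert (G := mvt_ub (fun u => Rpower u p) (fun x => p * Rpower x (p - 1)) u0 w0 (p * Rpower b (p - 1)) ltac:(lra) Hder Hc
        ltac:(intros x hx; apply Hd; lra)). simpl in G. lra. }
  destruct (Rle_dec u w) as [h|h].
  - destruct (K u w ltac:(lra) ltac:(lra)).
    rewrite Rabs_left1 by lra. rewrite Rabs_left1 by lra. lra.
  - destruct (K w u ltac:(lra) ltac:(lra)).
    rewrite Rabs_right by lra. rewrite (Rabs_right (u - w)) by lra. lra.
Qed.

Definition Fode (p B : R) (s a b : R) := / 2 * s * b - gam p * a - Rpower (clamp B b) p.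

Lemma local_exist p x0 A B : 1 < p -> 0 < B ->
  exists r (f g : R -> R), 0 < r /\ f x0 = A /\ g x0 = B /\
    forall t, Rabs (t - x0) < r -> 0 < g t /\ is_derive f t (g t) /\
       is_derive g t (/ 2 * t * g t - gam p * f t - abspow (g t) p).
Proof.
  intros hp hB.
  set (Lp := p * Rpower (2 * B) (p - 1)).
  assert (HLp : 0 <= Lp) by (unfold Lp; assert (0 < Rpower (2 * B) (p-1)) by apply Rpower_pos; nra).
  set (L := (Rabs x0 + 1) / 2 + Rabs (gam p) + Lp).
  assert (HPL : forall b b', Rabs (Rpower (clamp B b) p - Rpower (clamp B b') p) <= Lp * Rabs (b - b')).
  { intros b b'. eapply Rle_trans. apply (Rpower_lip (B/2) (2 * B)); try lra; apply clamp_range; auto.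
    apply Rmult_le_compat_l; auto. apply clamp_lip; auto. }
  assert (HF : Fcont (Fode p B)).
  { intros f g t Hf Hg. unfold Fode.
    apply continuity_pt_minus. apply continuity_pt_minus.
    - apply continuity_pt_mult. apply continuity_pt_mult. apply const_cont. apply continuity_pt_id. exact Hg.
    - apply continuity_pt_mult. apply const_cont. exact Hf.
    - apply (continuity_pt_comp g (fun b => Rpower (clamp B b) p)). exact Hg.
      apply lip_cont with Lp. intros y. apply HPL. }
  assert (HL0 : 0 <= L) by (unfold L; assert (0 <= Rabs x0) by apply Rabs_pos; assert (0 <= Rabs (gam p)) by apply Rabs_pos; lra).
  assert (HLip : forall s a b a' b', x0 - 1 <= s <= x0 + 1 ->
     Rabs (Fode p B s a b - Fode p B s a' b') <= L * (Rabs (a - a') + Rabs (b - b'))).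
  { intros s a b a' b' Hs. unfold Fode.
    replace (/ 2 * s * b - gam p * a - Rpower (clamp B b) p - (/ 2 * s * b' - gam p * a' - Rpower (clamp B b') p))
      with ((/2 * s) * (b - b') - gam p * (a - a') - (Rpower (clamp B b) p - Rpower (clamp B b') p)) by ring.
    assert (E1 : Rabs (/2 * s) <= (Rabs x0 + 1) / 2).
    { rewrite Rabs_mult, Rabs_right by lra. assert (Rabs s <= Rabs x0 + 1).
      { unfold Rabs; repeat destruct Rcase_abs; lra. } lra. }
    assert (P1 := HPL b b').
    assert (0 <= Rabs (a - a')) by apply Rabs_pos. assert (0 <= Rabs (b - b')) by apply Rabs_pos.
    assert (0 <= Rabs (gam p)) by apply Rabs_pos.
    assert (0 <= Rabs (/2 * s)) by apply Rabs_pos.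
    eapply Rle_trans. apply Rabs_triang. rewrite Rabs_Ropp.
    eapply Rle_trans. apply Rplus_le_compat_r. apply Rabs_triang. rewrite Rabs_Ropp.
    rewrite (Rabs_mult (/2 * s)), (Rabs_mult (gam p)).
    assert (Rabs (/ 2 * s) * Rabs (b - b') <= (Rabs x0 + 1) / 2 * Rabs (b - b')) by (apply Rmult_le_compat_r; auto).
    unfold L. nra. }
  set (MF := (Rabs x0 + 1) / 2 * Rabs B + Rabs (gam p) * Rabs A + Rpower (clamp B B) p).
  assert (HM : forall s, x0 - 1 <= s <= x0 + 1 -> Rabs (Fode p B s A B) <= MF).
  { intros s Hs. unfold Fode, MF.
    assert (E1 : Rabs (/2 * s) <= (Rabs x0 + 1) / 2).
    { rewrite Rabs_mult, Rabs_right by lra. assert (Rabs s <= Rabs x0 + 1).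
      { unfold Rabs; repeat destruct Rcase_abs; lra. } lra. }
    assert (0 < Rpower (clamp B B) p) by apply Rpower_pos.
    eapply Rle_trans. apply Rabs_triang. rewrite Rabs_Ropp, (Rabs_right (Rpower _ _)) by lra.
    eapply Rle_trans. apply Rplus_le_compat_r. apply Rabs_triang. rewrite Rabs_Ropp.
    rewrite !Rabs_mult. assert (0 <= Rabs B) by apply Rabs_pos. 
    assert (Rabs (/ 2) * Rabs s * Rabs B <= (Rabs x0 + 1) / 2 * Rabs B).
    { apply Rmult_le_compat_r; auto. rewrite <- Rabs_mult. auto. }
    lra. }
  destruct (picard (Fode p B) x0 A B L MF HF HL0 HLip HM) as [r [f [g [Hr [Hf0 [Hg0 Hd]]]]]].
  assert (Hgc : continuity_pt g x0).
  { apply derive_cont with (Fode p B x0 (f x0) (g x0)). apply Hd. rewrite Rminus_eq_0, Rabs_R0; lra. }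
  destruct (cont_eps g x0 Hgc (B/2) ltac:(lra)) as [d [Hd0 Hd1]].
  exists (Rmin r d), f, g. split. apply Rmin_pos; lra. split; auto. split; auto.
  intros t Ht.
  assert (Ht1 : Rabs (t - x0) < r) by (eapply Rlt_le_trans; [apply Ht| apply Rmin_l]).
  assert (Ht2 : Rabs (t - x0) < d) by (eapply Rlt_le_trans; [apply Ht| apply Rmin_r]).
  specialize (Hd1 t Ht2). rewrite Hg0 in Hd1. apply Rabs_def2 in Hd1.
  destruct (Hd t Ht1) as [D1 D2].
  split; [lra|]. split; auto.
  unfold Fode in D2. rewrite clamp_id in D2 by lra. rewrite abspow_pos by lra. exact D2.
Qed.


Definition Pf (f : R -> R) t := f (Rmax 0 t).
Definition Zf p (P V : R -> R) t := / 2 * t * V t - gam p * P t - abspow (V t) p.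

Lemma Pf_pos f t : 0 <= t -> Pf f t = f t.
Proof. intros h. unfold Pf. rewrite Rmax_right; auto. Qed.

Lemma Zf_pos p phi dphi t : 0 <= t -> Zf p (Pf phi) (Pf dphi) t = ode_rhs p phi dphi t.
Proof. intros h. unfold Zf, ode_rhs. rewrite !Pf_pos; auto. Qed.

Lemma rlt_mono (Rm : Rbar) t x : t <= x -> Rbar_lt x Rm -> Rbar_lt t Rm.
Proof. destruct Rm; simpl; auto; lra. Qed.

Lemma Pf_loc f t : 0 < t -> locally t (fun s => f s = Pf f s).
Proof.
  intros h. apply locally_R with t; auto. intros y Hy. unfold Pf.
  rewrite Rmax_right; auto. apply Rabs_def2 in Hy. lra.
Qed.

Lemma sol_deriv p al Rm phi dphi : is_sol p al Rm phi dphi -> forall t, 0 < t -> Rbar_lt t Rm ->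
  is_derive (Pf phi) t (Pf dphi t) /\ is_derive (Pf dphi) t (Zf p (Pf phi) (Pf dphi) t).
Proof.
  intros (_ & _ & _ & _ & _ & Hd) t Ht HtR. destruct (Hd t Ht HtR) as [H1 H2].
  rewrite Zf_pos, Pf_pos by lra. split.
  - apply is_derive_ext_loc with phi; auto. apply Pf_loc; auto.
  - apply is_derive_ext_loc with dphi; auto. apply Pf_loc; auto.
Qed.

Lemma rd_cont f l : right_deriv f 0 l -> continuity_pt (Pf f) 0.
Proof.
  intros H. destruct (proj1 (filterlim_locally _ _) H (mkposreal 1 Rlt_0_1)) as [d Hd].
  assert (Hb : forall y, 0 < y < d -> Rabs (f y - f 0) <= (Rabs l + 1) * y).
  { intros y Hy. assert (Q : ball l 1 ((f y - f 0) / (y - 0))).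
    { apply Hd; [| lra]. change (Rabs (y - 0) < d). rewrite Rminus_0_r, Rabs_right; lra. }
    change (Rabs ((f y - f 0) / (y - 0) - l) < 1) in Q.
    rewrite Rminus_0_r in Q.
    replace (f y - f 0) with ((f y - f 0) / y * y) by (field; lra).
    rewrite Rabs_mult, (Rabs_right y) by lra. apply Rmult_le_compat_r; [lra|].
    assert (Rabs ((f y - f 0) / y) - Rabs l <= Rabs ((f y - f 0) / y - l)) by apply Rabs_triang_inv. lra. }
  apply eps_cont. intros eps He.
  assert (Hl : 0 < Rabs l + 1) by (assert (0 <= Rabs l) by apply Rabs_pos; lra).
  exists (Rmin d (eps / (Rabs l + 1))). split. apply Rmin_pos. apply cond_pos. apply Rdiv_lt_0_compat; lra.
  intros y Hy. unfold Pf. rewrite (Rmax_left 0 0) by lra.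
  destruct (Rle_dec y 0) as [h|h].
  - rewrite Rmax_left by lra. rewrite Rminus_eq_0, Rabs_R0; lra.
  - rewrite Rmax_right by lra. rewrite Rminus_0_r, Rabs_right in Hy by lra.
    assert (y < d) by (eapply Rlt_le_trans; [apply Hy| apply Rmin_l]).
    assert (y < eps / (Rabs l + 1)) by (eapply Rlt_le_trans; [apply Hy| apply Rmin_r]).
    eapply Rle_lt_trans. apply Hb; lra.
    apply Rlt_div_r in H1; lra.
Qed.

Lemma sol_cont p al Rm phi dphi : 1 <= p -> is_sol p al Rm phi dphi -> forall t, 0 <= t -> Rbar_lt t Rm ->
  continuity_pt (Pf phi) t /\ continuity_pt (Pf dphi) t /\ continuity_pt (Zf p (Pf phi) (Pf dphi)) t.
Proof.
  intros hp Hs t Ht HtR.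
  assert (HPV : continuity_pt (Pf phi) t /\ continuity_pt (Pf dphi) t).
  { destruct (Req_dec t 0) as [->|Hne].
    - destruct Hs as (_ & _ & _ & H1 & H2 & _). split; eapply rd_cont; eauto.
    - destruct (sol_deriv _ _ _ _ _ Hs t ltac:(lra) HtR) as [D1 D2].
      split; eapply derive_cont; eauto. }
  destruct HPV as [HP HV]. split; auto. split; auto.
  unfold Zf. apply continuity_pt_minus. apply continuity_pt_minus.
  - apply continuity_pt_mult; auto. apply continuity_pt_mult. apply continuity_pt_const; intros ? ?; auto.
    apply continuity_pt_id.
  - apply continuity_pt_mult; auto. apply continuity_pt_const; intros ? ?; auto.
  - apply (continuity_pt_comp (Pf dphi) (fun u => abspow u p)); auto. apply abspow_cont; auto.
Qed.

Lemma gam_c p : 1 < p -> / 2 - gam p = / (2 * (p - 1)).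
Proof. intros h. unfold gam. field. lra. Qed.

Lemma zder p (P V Z : R -> R) t : 1 < p -> is_derive P t (V t) -> is_derive V t (Zf p P V t) -> 0 < V t ->
  is_derive (Zf p P V) t (/ (2 * (p - 1)) * V t + (t / 2 - p * Rpower (V t) (p - 1)) * Zf p P V t).
Proof.
  intros hp HP HV Hpos. set (Z0 := Zf p P V t) in *.
  assert (HA := is_derive_abspow (V t) p Hpos).
  assert (HC := is_derive_comp (fun u => abspow u p) V t _ _ HA HV).
  apply is_derive_Reals in HP, HV, HC. apply is_derive_Reals.
  evar (d : R).
  assert (derivable_pt_lim (fun t => / 2 * t * V t - gam p * P t - abspow (V t) p) t d).
  { apply (derivable_pt_lim_minus (fun t => / 2 * t * V t - gam p * P t) (fun t => abspow (V t) p)).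
    apply (derivable_pt_lim_minus (fun t => / 2 * t * V t) (fun t => gam p * P t)).
    apply (derivable_pt_lim_mult (fun t => / 2 * t) V).
    apply (derivable_pt_lim_scal id). apply derivable_pt_lim_id. exact HV.
    apply (derivable_pt_lim_scal P). exact HP. exact HC. }
  subst d. unfold scal in H. simpl in H. unfold mult in H; simpl in H.
  rewrite <- gam_c by auto.
  replace ((/ 2 - gam p) * V t + (t / 2 - p * Rpower (V t) (p - 1)) * Z0) with
    (/ 2 * 1 * V t + / 2 * t * Z0 - gam p * V t - Z0 * (p * Rpower (V t) (p - 1))) by field.
  exact H.
Qed.


Definition Setup p al Rm phi dphi := 1 < p /\ 0 < al /\ is_sol p al Rm phi dphi /\
  Rpower al (p - 1) <= / 4 /\ Rpower al (p - 1) <= / (2 * (p - 1)) / 8.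

Lemma setup_facts p al Rm phi dphi : Setup p al Rm phi dphi ->
  Pf phi 0 = 0 /\ Pf dphi 0 = al /\
  Zf p (Pf phi) (Pf dphi) 0 = - (al * Rpower al (p - 1)) /\
  0 < Rpower al (p - 1) /\ 0 < / (2 * (p - 1)) /\
  (forall t, 0 < t -> Rbar_lt t Rm -> is_derive (Pf phi) t (Pf dphi t) /\
       is_derive (Pf dphi) t (Zf p (Pf phi) (Pf dphi) t)) /\
  (forall t, 0 <= t -> Rbar_lt t Rm -> continuity_pt (Pf phi) t /\ continuity_pt (Pf dphi) t /\
       continuity_pt (Zf p (Pf phi) (Pf dphi)) t) /\
  (forall t, 0 < t -> Rbar_lt t Rm -> 0 < Pf dphi t -> is_derive (Zf p (Pf phi) (Pf dphi)) t
     (/ (2 * (p - 1)) * Pf dphi t + (t / 2 - p * Rpower (Pf dphi t) (p - 1)) * Zf p (Pf phi) (Pf dphi) t)).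
Proof.
  intros (hp & hal & Hs & HK1 & HK2).
  assert (H0 : Pf phi 0 = 0) by (rewrite Pf_pos by lra; apply Hs).
  assert (H1 : Pf dphi 0 = al) by (rewrite Pf_pos by lra; apply Hs).
  split; auto. split; auto. split.
  { unfold Zf. rewrite H0, H1, abspow_pos by auto.
    replace p with (1 + (p - 1)) at 2 by ring. rewrite Rpower_plus, Rpower_1 by auto. ring. }
  split. apply Rpower_pos. split. apply Rinv_0_lt_compat; lra.
  split. intros t Ht HtR; apply (sol_deriv p al Rm phi dphi Hs t Ht HtR).
  split. intros t Ht HtR; apply (sol_cont p al Rm phi dphi ltac:(lra) Hs t Ht HtR).
  intros t Ht HtR Hv. destruct (sol_deriv _ _ _ _ _ Hs t Ht HtR) as [D1 D2].
  apply zder; auto.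
Qed.

Lemma phase1 p al Rm phi dphi : Setup p al Rm phi dphi -> forall x, 0 <= x <= 1 -> Rbar_lt x Rm ->
  (forall t, 0 <= t <= x -> Zf p (Pf phi) (Pf dphi) t < 0) ->
  forall t, 0 <= t <= x ->
    - 2 * (al * Rpower al (p - 1)) < Zf p (Pf phi) (Pf dphi) t /\ al / 2 <= Pf dphi t /\
    - (al * Rpower al (p - 1)) + / (2 * (p - 1)) * al / 4 * t <= Zf p (Pf phi) (Pf dphi) t.
Proof.
  intros HS x Hx HxR Hneg.
  destruct (setup_facts _ _ _ _ _ HS) as (HP0 & HV0 & HZ0 & HKp & Hc & Hder & Hcont & Hzd).
  destruct HS as (hp & hal & Hsol & HK1 & HK2).
  set (P := Pf phi) in *; set (V := Pf dphi) in *; set (Z := Zf p P V) in *.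
  set (K := Rpower al (p - 1)) in *; set (c := / (2 * (p - 1))) in *.
  assert (HR : forall t, 0 <= t <= x -> Rbar_lt t Rm) by (intros t Ht; apply rlt_mono with x; auto; lra).
  assert (HalK : 0 < al * K) by nra.
  assert (I1 : forall t, 0 <= t <= x -> - 2 * (al * K) < Z t).
  { intros t Ht. destruct (Rlt_le_dec (- 2 * (al * K)) (Z t)) as [h|h]; auto. exfalso.
    assert (Ht0 : 0 < t). { destruct (Req_dec t 0) as [->|]; [|lra]. rewrite HZ0 in h. lra. }
    destruct (first_hit Z 0 t (- 2 * (al * K))) as [s [Hs1 [Hs2 Hs3]]]; auto.
    { intros y Hy. apply Hcont; [lra| apply HR; lra]. }
    { rewrite HZ0; lra. }
    assert (Vs : al / 2 <= V s).
    { assert (G := mvt_lb V Z 0 s (- 2 * (al * K)) ltac:(lra)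
        ltac:(intros y Hy; apply Hder; [lra| apply HR; lra])
        ltac:(intros y Hy; apply Hcont; [lra| apply HR; lra])
        ltac:(intros y Hy; destruct (Req_dec y s) as [->|]; [lra| left; apply Hs3; lra])).
      rewrite HV0 in G. assert (K * s <= / 4) by (assert (s <= 1) by lra; nra). nra. }
    assert (D := Hzd s ltac:(lra) ltac:(apply HR; lra) ltac:(lra)). fold c V Z in D.
    apply is_derive_Reals in D.
    assert (Dn := deriv_left_sign Z s _ 0 D ltac:(lra) ltac:(intros y Hy; rewrite Hs2; apply Hs3; lra)).
    rewrite Hs2 in Dn.
    assert (0 < Rpower (V s) (p - 1)) by apply Rpower_pos.
    assert (0 < p * Rpower (V s) (p - 1) * (2 * (al * K))) by (apply Rmult_lt_0_compat; nra).
    assert (c * (al / 2) <= c * V s) by (apply Rmult_le_compat_l; lra).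
    assert (s / 2 * (- 2 * (al * K)) >= - (al * K)) by (assert (s <= 1) by lra; nra).
    assert (al * K <= al * (c / 8)) by (apply Rmult_le_compat_l; lra).
    nra. }
  assert (I2 : forall t, 0 <= t <= x -> al / 2 <= V t).
  { intros t Ht. assert (G := mvt_lb V Z 0 t (- 2 * (al * K)) ltac:(lra)
        ltac:(intros y Hy; apply Hder; [lra| apply HR; lra])
        ltac:(intros y Hy; apply Hcont; [lra| apply HR; lra])
        ltac:(intros y Hy; left; apply I1; lra)).
    rewrite HV0 in G. assert (K * t <= / 4) by nra. nra. }
  intros t Ht. split; [apply I1; auto|]. split; [apply I2; auto|].
  assert (Hb : forall y, 0 <= y <= t -> c * al / 4 <= c * V y + (y / 2 - p * Rpower (V y) (p - 1)) * Z y).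
  { intros y Hy. assert (Vy := I2 y ltac:(lra)). assert (Zy := I1 y ltac:(lra)). assert (Zn := Hneg y ltac:(lra)).
    assert (0 < Rpower (V y) (p - 1)) by apply Rpower_pos.
    assert (0 <= p * Rpower (V y) (p - 1) * - Z y) by (apply Rmult_le_pos; nra).
    assert (c * (al / 2) <= c * V y) by (apply Rmult_le_compat_l; lra).
    assert (y / 2 * Z y >= - (al * K)) by nra.
    assert (al * K <= al * (c / 8)) by (apply Rmult_le_compat_l; lra).
    nra. }
  assert (G := mvt_lb Z (fun u => c * V u + (u / 2 - p * Rpower (V u) (p - 1)) * Z u) 0 t (c * al / 4) ltac:(lra)
      ltac:(intros y Hy; apply Hzd; [lra| apply HR; lra| assert (al / 2 <= V y) by (apply I2; lra); lra])
      ltac:(intros y Hy; apply Hcont; [lra| apply HR; lra]) Hb).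
  rewrite HZ0 in G. lra.
Qed.

Lemma phase2 p al Rm phi dphi : Setup p al Rm phi dphi -> forall s, 0 < s -> Rbar_lt s Rm ->
  Zf p (Pf phi) (Pf dphi) s = 0 -> 0 < Pf dphi s ->
  forall t, s < t -> Rbar_lt t Rm -> 0 < Zf p (Pf phi) (Pf dphi) t /\ Pf dphi s <= Pf dphi t.
Proof.
  intros HS s Hs HsR Hz Hv.
  destruct (setup_facts _ _ _ _ _ HS) as (HP0 & HV0 & HZ0 & HKp & Hc & Hder & Hcont & Hzd).
  destruct HS as (hp & hal & Hsol & HK1 & HK2).
  set (P := Pf phi) in *; set (V := Pf dphi) in *; set (Z := Zf p P V) in *.
  set (c := / (2 * (p - 1))) in *.
  assert (D := Hzd s Hs HsR Hv). fold c V Z in D. rewrite Hz, Rmult_0_r, Rplus_0_r in D.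
  apply is_derive_Reals in D.
  destruct (deriv_right_pos Z s _ D ltac:(apply Rmult_lt_0_compat; lra)) as [d [Hd Hd']].
  rewrite Hz in Hd'.
  assert (Pos : forall t, s < t -> Rbar_lt t Rm -> 0 < Z t).
  { intros t Ht HtR. destruct (Rlt_le_dec 0 (Z t)) as [h|h]; auto. exfalso.
    set (a := s + Rmin d (t - s) / 2).
    assert (Ha : s < a < s + d /\ a < t) by (unfold a, Rmin; destruct Rle_dec; lra).
    assert (HR : forall y, s <= y <= t -> Rbar_lt y Rm) by (intros y Hy; apply rlt_mono with t; auto; lra).
    destruct (first_hit Z a t 0) as [s' [Hs1 [Hs2 Hs3]]]; try lra.
    { intros y Hy. apply Hcont; [lra| apply HR; lra]. }
    { apply Hd'; lra. }
    assert (Vle : V s <= V s').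
    { assert (G := mvt_lb V Z s s' 0 ltac:(lra)
        ltac:(intros y Hy; apply Hder; [lra| apply HR; lra])
        ltac:(intros y Hy; apply Hcont; [lra| apply HR; lra])).
      assert (0 * (s' - s) = 0) by ring.
      enough (forall y, s <= y <= s' -> 0 <= Z y) by (specialize (G H0); lra).
      intros y Hy. destruct (Req_dec y s) as [->|]; [lra|]. destruct (Req_dec y s') as [->|]; [lra|].
      destruct (Rlt_le_dec y a). left; apply Hd'; lra. left; apply Hs3; lra. }
    assert (D' := Hzd s' ltac:(lra) ltac:(apply HR; lra) ltac:(lra)). fold c V Z in D'.
    rewrite Hs2, Rmult_0_r, Rplus_0_r in D'. apply is_derive_Reals in D'.
    assert (Dn := deriv_left_sign Z s' _ a D' ltac:(lra) ltac:(intros y Hy; rewrite Hs2; apply Hs3; lra)).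
    assert (0 < c * V s') by (apply Rmult_lt_0_compat; lra). lra. }
  intros t Ht HtR. split; [apply Pos; auto|].
  assert (HR : forall y, s <= y <= t -> Rbar_lt y Rm) by (intros y Hy; apply rlt_mono with t; auto; lra).
  assert (G := mvt_lb V Z s t 0 ltac:(lra)
        ltac:(intros y Hy; apply Hder; [lra| apply HR; lra])
        ltac:(intros y Hy; apply Hcont; [lra| apply HR; lra])).
  enough (forall y, s <= y <= t -> 0 <= Z y) by (specialize (G H); lra).
  intros y Hy. destruct (Req_dec y s) as [->|]; [lra|]. left; apply Pos; [lra| apply HR; lra].
Qed.

Lemma L_hit p al Rm phi dphi : Setup p al Rm phi dphi ->
  Rbar_lt (8 * Rpower al (p - 1) / / (2 * (p - 1))) Rm ->
  exists t0, 0 <= t0 /\ Rbar_lt t0 Rm /\ 0 <= Zf p (Pf phi) (Pf dphi) t0.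
Proof.
  intros HS HR. destruct (classic (exists t0, 0 <= t0 /\ Rbar_lt t0 Rm /\ 0 <= Zf p (Pf phi) (Pf dphi) t0)) as [h|h]; auto.
  exfalso.
  destruct (setup_facts _ _ _ _ _ HS) as (HP0 & HV0 & HZ0 & HKp & Hc & Hder & Hcont & Hzd).
  assert (HS' := HS). destruct HS' as (hp & hal & Hsol & HK1 & HK2).
  set (K := Rpower al (p - 1)) in *; set (c := / (2 * (p - 1))) in *.
  set (xs := 8 * K / c) in *.
  assert (Hxs : 0 <= xs <= 1).
  { unfold xs. split. apply Rmult_le_pos. lra. left; apply Rinv_0_lt_compat; lra.
    apply (Rmult_le_reg_r c); auto. unfold Rdiv. rewrite Rmult_assoc, Rinv_l by lra. lra. }
  assert (Hneg : forall t, 0 <= t <= xs -> Zf p (Pf phi) (Pf dphi) t < 0).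
  { intros t Ht. destruct (Rlt_le_dec (Zf p (Pf phi) (Pf dphi) t) 0) as [h'|h']; auto. exfalso. apply h.
    exists t. split; [lra|]. split; auto. apply rlt_mono with xs; auto; lra. }
  destruct (phase1 _ _ _ _ _ HS xs Hxs HR Hneg xs ltac:(lra)) as [_ [_ G]].
  fold K c in G. specialize (Hneg xs ltac:(lra)).
  assert (c * al / 4 * xs = 2 * (al * K)) by (unfold xs; field; lra).
  assert (0 < al * K) by nra. lra.
Qed.

Lemma L_struct p al Rm phi dphi : Setup p al Rm phi dphi ->
  (exists t0, 0 <= t0 /\ Rbar_lt t0 Rm /\ 0 <= Zf p (Pf phi) (Pf dphi) t0) ->
  exists Rb, 0 < Rb <= 1 /\ Rbar_lt Rb Rm /\
    (forall t, 0 <= t < Rb -> Zf p (Pf phi) (Pf dphi) t < 0) /\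
    al / 2 <= Pf dphi Rb /\
    (forall t, Rb < t -> Rbar_lt t Rm -> 0 < Zf p (Pf phi) (Pf dphi) t /\ Pf dphi Rb <= Pf dphi t).
Proof.
  intros HS [t0 [Ht0 [Ht0R Hz0]]].
  destruct (setup_facts _ _ _ _ _ HS) as (HP0 & HV0 & HZ0 & HKp & Hc & Hder & Hcont & Hzd).
  assert (HS' := HS). destruct HS' as (hp & hal & Hsol & HK1 & HK2).
  set (P := Pf phi) in *; set (V := Pf dphi) in *; set (Z := Zf p P V) in *.
  set (K := Rpower al (p - 1)) in *; set (c := / (2 * (p - 1))) in *.
  assert (HalK : 0 < al * K) by nra.
  assert (Ht0p : 0 < t0). { destruct (Req_dec t0 0) as [->|]; [|lra]. lra. }
  assert (HR : forall y, 0 <= y <= t0 -> Rbar_lt y Rm) by (intros y Hy; apply rlt_mono with t0; auto; lra).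
  destruct (first_hit (fun u => - Z u) 0 t0 0) as [Rb [Hb1 [Hb2 Hb3]]]; auto.
  { intros y Hy. apply continuity_pt_opp. apply Hcont; [lra| apply HR; lra]. }
  { lra. } { lra. }
  assert (HbR : Rbar_lt Rb Rm) by (apply HR; lra).
  assert (Hneg : forall t, 0 <= t < Rb -> Z t < 0) by (intros t Ht; specialize (Hb3 t Ht); lra).
  set (xs := 8 * K / c).
  assert (Hxs : 0 <= xs <= 1).
  { unfold xs. split. apply Rmult_le_pos. lra. left; apply Rinv_0_lt_compat; lra.
    apply (Rmult_le_reg_r c); auto. unfold Rdiv. rewrite Rmult_assoc, Rinv_l by lra. lra. }
  assert (Hle : Rb <= xs).
  { destruct (Rle_lt_dec Rb xs) as [h|h]; auto. exfalso.
    destruct (phase1 _ _ _ _ _ HS xs Hxs (rlt_mono Rm xs Rb ltac:(lra) HbR)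
        ltac:(intros t Ht; apply Hneg; lra) xs ltac:(lra)) as [_ [_ G]].
    fold P V Z K c in G. specialize (Hneg xs ltac:(lra)).
    assert (c * al / 4 * xs = 2 * (al * K)) by (unfold xs; field; lra). lra. }
  assert (VRb : al / 2 <= V Rb).
  { assert (G := mvt_lb V Z 0 Rb (- 2 * (al * K)) ltac:(lra)
        ltac:(intros y Hy; apply Hder; [lra| apply HR; lra])
        ltac:(intros y Hy; apply Hcont; [lra| apply HR; lra])).
    enough (forall y, 0 <= y <= Rb -> - 2 * (al * K) <= Z y).
    { specialize (G H). rewrite HV0 in G. assert (K * Rb <= / 4) by nra. nra. }
    intros y Hy. destruct (Req_dec y Rb) as [->|]; [lra|].
    left. apply (phase1 _ _ _ _ _ HS y ltac:(lra) ltac:(apply HR; lra)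
       ltac:(intros t Ht; apply Hneg; lra) y ltac:(lra)). }
  exists Rb. split; [lra|]. split; auto. split; auto. split; auto.
  intros t Ht HtR. simpl in Hb2. apply (phase2 _ _ _ _ _ HS Rb); auto.
  all: first [lra | change (Z Rb = 0); lra | change (0 < V Rb); lra].
Qed.

Lemma Vlow p al Rm phi dphi : Setup p al Rm phi dphi ->
  forall t, 0 <= t -> Rbar_lt t Rm -> al / 2 <= Pf dphi t.
Proof.
  intros HS t Ht HtR.
  assert (HS' := HS). destruct HS' as (hp & hal & Hsol & HK1 & HK2).
  destruct (classic (exists t0, 0 <= t0 /\ Rbar_lt t0 Rm /\ 0 <= Zf p (Pf phi) (Pf dphi) t0)) as [h|h].
  - destruct (L_struct _ _ _ _ _ HS h) as [Rb [Hb1 [HbR [Hneg [HV Hpos]]]]].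
    destruct (Rtotal_order t Rb) as [h1|[h1|h1]].
    + apply (phase1 _ _ _ _ _ HS t ltac:(lra) HtR ltac:(intros y Hy; apply Hneg; lra) t ltac:(lra)).
    + subst; auto.
    + destruct (Hpos t h1 HtR). lra.
  - assert (Hneg : forall y, 0 <= y -> Rbar_lt y Rm -> Zf p (Pf phi) (Pf dphi) y < 0).
    { intros y Hy HyR. destruct (Rlt_le_dec (Zf p (Pf phi) (Pf dphi) y) 0) as [h'|h']; auto.
      exfalso; apply h; exists y; auto. }
    assert (Ht1 : t <= 1).
    { destruct (Rle_lt_dec t 1) as [h1|h1]; auto. exfalso.
      set (K := Rpower al (p - 1)) in *; set (c := / (2 * (p - 1))) in *.
      assert (0 < c) by (apply Rinv_0_lt_compat; lra).
      assert (Hxs : 8 * K / c <= 1).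
      { apply (Rmult_le_reg_r c); auto. unfold Rdiv. rewrite Rmult_assoc, Rinv_l by lra. lra. }
      destruct (L_hit _ _ _ _ _ HS (rlt_mono Rm (8 * K / c) t ltac:(lra) HtR)) as [t0 [A1 [A2 A3]]].
      specialize (Hneg t0 A1 A2). lra. }
    apply (phase1 _ _ _ _ _ HS t ltac:(lra) HtR ltac:(intros y Hy; apply Hneg; [lra| apply rlt_mono with t; auto; lra]) t ltac:(lra)).
Qed.

Lemma Ppos p al Rm phi dphi : Setup p al Rm phi dphi ->
  forall t, 0 < t -> Rbar_lt t Rm -> al / 2 * t <= Pf phi t.
Proof.
  intros HS t Ht HtR.
  destruct (setup_facts _ _ _ _ _ HS) as (HP0 & HV0 & HZ0 & HKp & Hc & Hder & Hcont & Hzd).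
  assert (HR : forall y, 0 <= y <= t -> Rbar_lt y Rm) by (intros y Hy; apply rlt_mono with t; auto; lra).
  assert (G := mvt_lb (Pf phi) (Pf dphi) 0 t (al / 2) ltac:(lra)
        ltac:(intros y Hy; apply Hder; [lra| apply HR; lra])
        ltac:(intros y Hy; apply Hcont; [lra| apply HR; lra])
        ltac:(intros y Hy; apply (Vlow _ _ _ _ _ HS); [lra| apply HR; lra])).
  rewrite HP0 in G. lra.
Qed.


Definition LL (f : R -> R) (r l : R) := forall eps, 0 < eps ->
  exists d, 0 < d /\ forall t, r - d < t < r -> Rabs (f t - l) < eps.

Lemma LL_ext f g r l a : a < r -> (forall t, a < t < r -> f t = g t) -> LL f r l -> LL g r l.
Proof.
  intros ha He H eps Heps. destruct (H eps Heps) as [d [Hd Hd']].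
  exists (Rmin d (r - a)). split. apply Rmin_pos; lra.
  intros t Ht. assert (Rmin d (r - a) <= d) by apply Rmin_l. assert (Rmin d (r - a) <= r - a) by apply Rmin_r.
  rewrite <- He by lra. apply Hd'. lra.
Qed.

Lemma LL_const c r : LL (fun _ => c) r c.
Proof. intros eps He. exists 1. split; [lra|]. intros. rewrite Rminus_eq_0, Rabs_R0; lra. Qed.

Lemma LL_id r : LL (fun t => t) r r.
Proof.
  intros eps He. exists eps. split; auto. intros t Ht. rewrite Rabs_left; lra.
Qed.

Lemma LL_plus f g r l m : LL f r l -> LL g r m -> LL (fun t => f t + g t) r (l + m).
Proof.
  intros Hf Hg eps He. destruct (Hf (eps/2) ltac:(lra)) as [d1 [H1 H1']].
  destruct (Hg (eps/2) ltac:(lra)) as [d2 [H2 H2']].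
  exists (Rmin d1 d2). split. apply Rmin_pos; lra.
  intros t Ht. assert (Rmin d1 d2 <= d1) by apply Rmin_l. assert (Rmin d1 d2 <= d2) by apply Rmin_r.
  specialize (H1' t ltac:(lra)). specialize (H2' t ltac:(lra)).
  replace (f t + g t - (l + m)) with ((f t - l) + (g t - m)) by ring.
  eapply Rle_lt_trans. apply Rabs_triang. lra.
Qed.

Lemma LL_opp f r l : LL f r l -> LL (fun t => - f t) r (- l).
Proof.
  intros Hf eps He. destruct (Hf eps He) as [d [H1 H1']]. exists d. split; auto.
  intros t Ht. replace (- f t - - l) with (- (f t - l)) by ring. rewrite Rabs_Ropp. auto.
Qed.

Lemma LL_minus f g r l m : LL f r l -> LL g r m -> LL (fun t => f t - g t) r (l - m).
Proof. intros Hf Hg. apply (LL_plus f (fun t => - g t)); auto. apply LL_opp; auto. Qed.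

Lemma LL_mult f g r l m : LL f r l -> LL g r m -> LL (fun t => f t * g t) r (l * m).
Proof.
  intros Hf Hg eps He.
  assert (0 <= Rabs l) by apply Rabs_pos. assert (0 <= Rabs m) by apply Rabs_pos.
  set (eta := Rmin 1 (eps / (Rabs l + Rabs m + 2))).
  assert (Heta : 0 < eta) by (apply Rmin_pos; [lra| apply Rdiv_lt_0_compat; lra]).
  assert (Heta1 : eta <= 1) by apply Rmin_l.
  assert (Heta2 : eta * (Rabs l + Rabs m + 2) <= eps).
  { assert (eta <= eps / (Rabs l + Rabs m + 2)) by apply Rmin_r.
    assert (eta * (Rabs l + Rabs m + 2) <= eps / (Rabs l + Rabs m + 2) * (Rabs l + Rabs m + 2))
      by (apply Rmult_le_compat_r; lra).
    unfold Rdiv in H2. rewrite Rmult_assoc, Rinv_l in H2 by lra. lra. }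
  destruct (Hf eta Heta) as [d1 [H1 H1']]. destruct (Hg eta Heta) as [d2 [H2 H2']].
  exists (Rmin d1 d2). split. apply Rmin_pos; lra.
  intros t Ht. assert (Rmin d1 d2 <= d1) by apply Rmin_l. assert (Rmin d1 d2 <= d2) by apply Rmin_r.
  specialize (H1' t ltac:(lra)). specialize (H2' t ltac:(lra)).
  replace (f t * g t - l * m) with (f t * (g t - m) + m * (f t - l)) by ring.
  eapply Rle_lt_trans. apply Rabs_triang. rewrite !Rabs_mult.
  assert (Rabs (f t) <= Rabs l + 1).
  { replace (f t) with ((f t - l) + l) by ring. eapply Rle_trans. apply Rabs_triang. lra. }
  assert (Rabs (f t) * Rabs (g t - m) <= (Rabs l + 1) * eta).
  { apply Rmult_le_compat; try apply Rabs_pos; lra. }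
  assert (Rabs m * Rabs (f t - l) <= Rabs m * eta) by (apply Rmult_le_compat_l; lra).
  nra.
Qed.

Lemma LL_comp f g r l : LL f r l -> continuity_pt g l -> LL (fun t => g (f t)) r (g l).
Proof.
  intros Hf Hg eps He. destruct (cont_eps g l Hg eps He) as [d [Hd Hd']].
  destruct (Hf d Hd) as [d1 [H1 H1']]. exists d1; split; [exact H1| intros t Ht; apply Hd'; apply H1'; exact Ht].
Qed.

Lemma LL_ge f r l a c : a < r -> LL f r l -> (forall t, a < t < r -> c <= f t) -> c <= l.
Proof.
  intros ha Hf Hc. destruct (Rle_lt_dec c l) as [h|h]; auto. exfalso.
  destruct (Hf (c - l) ltac:(lra)) as [d [Hd Hd']].
  set (t := Rmax a (r - d) / 2 + r / 2).
  assert (Ht : a < t < r /\ r - d < t) by (unfold t, Rmax; destruct Rle_dec; lra).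
  specialize (Hd' t ltac:(lra)). specialize (Hc t ltac:(lra)). apply Rabs_def2 in Hd'. lra.
Qed.

Lemma LL_mono f r a U : a < r -> (forall t s, a <= t <= s -> s < r -> f t <= f s) ->
  (forall t, a <= t < r -> f t <= U) -> exists l, LL f r l.
Proof.
  intros ha Hm HU.
  set (E := fun y => exists t, a <= t < r /\ y = f t).
  assert (HB : bound E) by (exists U; intros y [t [Ht ->]]; apply HU; auto).
  assert (HE : exists y, E y) by (exists (f a); exists a; split; [lra| auto]).
  destruct (completeness E HB HE) as [l [Hub Hlub]].
  exists l. intros eps He.
  assert (Hex : exists t1, a <= t1 < r /\ l - eps < f t1).
  { apply NNPP. intros Hn. assert (l <= l - eps); [|lra].
    apply Hlub. intros y [t [Ht ->]]. destruct (Rle_lt_dec (f t) (l - eps)); auto.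
    exfalso. apply Hn. exists t. auto. }
  destruct Hex as [t1 [Ht1 Hf1]]. exists (r - t1). split; [lra|].
  intros t Ht. assert (f t <= l) by (apply Hub; exists t; split; [lra| auto]).
  assert (f t1 <= f t) by (apply Hm; lra).
  rewrite Rabs_left1 by lra. lra.
Qed.

Lemma le_eps_lemma x y C : 0 <= C -> (forall tau, 0 < tau -> x <= y + C * tau) -> x <= y.
Proof.
  intros hC H. apply le_epsilon. intros e He.
  specialize (H (e / (C + 1)) ltac:(apply Rdiv_lt_0_compat; lra)).
  assert (C * (e / (C + 1)) <= e).
  { unfold Rdiv. rewrite <- Rmult_assoc. apply (Rmult_le_reg_r (C + 1)); [lra|].
    rewrite Rmult_assoc, Rinv_l by lra. nra. }
  lra.
Qed.

Lemma LDQ f df a r A d : a < r -> (forall t, a < t < r -> is_derive f t (df t)) ->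
  LL f r A -> LL df r d -> LL (fun t => (f t - A) / (t - r)) r d.
Proof.
  intros ha Hd HfA Hdf eps He.
  destruct (Hdf (eps / 2) ltac:(lra)) as [d1 [H1 H1']].
  exists (Rmin d1 (r - a)). split. apply Rmin_pos; lra.
  intros t Ht. assert (Rmin d1 (r - a) <= d1) by apply Rmin_l. assert (Rmin d1 (r - a) <= r - a) by apply Rmin_r.
  assert (Key : Rabs (A - f t - d * (r - t)) <= eps / 2 * (r - t)).
  { apply (le_eps_lemma _ _ (1 + Rabs d)). assert (0 <= Rabs d) by apply Rabs_pos. lra.
    intros tau Htau. destruct (HfA tau Htau) as [d2 [H2 H2']].
    assert (Hm1 : Rmin d2 tau <= d2) by apply Rmin_l. assert (Hm2 : Rmin d2 tau <= tau) by apply Rmin_r.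
    assert (Hm3 : 0 < Rmin d2 tau) by (apply Rmin_pos; lra).
    set (s := (Rmax t (r - Rmin d2 tau) + r) / 2).
    assert (Hs : t < s < r /\ r - d2 < s /\ r - s < tau).
    { unfold s, Rmax; destruct Rle_dec; lra. }
    assert (Hseg : forall x, t <= x <= s -> a < x < r /\ r - d1 < x) by (intros; lra).
    assert (Hc : forall x, t <= x <= s -> continuity_pt f x).
    { intros x Hx. eapply derive_cont. apply Hd. apply Hseg; auto. }
    assert (Hder : forall x, t < x < s -> is_derive f x (df x)) by (intros x Hx; apply Hd; apply Hseg; lra).
    assert (Hb : forall x, t <= x <= s -> d - eps / 2 <= df x <= d + eps / 2).
    { intros x Hx. destruct (Hseg x Hx). specialize (H1' x ltac:(lra)). apply Rabs_def2 in H1'. lra. }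
    assert (G1 := mvt_lb f df t s (d - eps / 2) ltac:(lra) Hder Hc ltac:(intros x Hx; apply Hb; auto)).
    assert (G2 := mvt_ub f df t s (d + eps / 2) ltac:(lra) Hder Hc ltac:(intros x Hx; apply Hb; auto)).
    specialize (H2' s ltac:(lra)).
    replace (A - f t - d * (r - t)) with ((A - f s) + (f s - f t - d * (s - t)) - d * (r - s)) by ring.
    assert (Rabs (f s - f t - d * (s - t)) <= eps / 2 * (s - t)).
    { apply Rabs_le. split; nra. }
    assert (Rabs (A - f s) < tau) by (rewrite <- Rabs_Ropp, Ropp_minus_distr; auto).
    assert (Rabs (d * (r - s)) <= Rabs d * tau).
    { rewrite Rabs_mult, (Rabs_right (r - s)) by lra. apply Rmult_le_compat_l. apply Rabs_pos. lra. }
    eapply Rle_trans. apply Rabs_triang. rewrite Rabs_Ropp.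
    eapply Rle_trans. apply Rplus_le_compat_r. apply Rabs_triang.
    assert (eps / 2 * (s - t) <= eps / 2 * (r - t)) by (apply Rmult_le_compat_l; lra).
    lra. }
  replace ((f t - A) / (t - r) - d) with ((A - f t - d * (r - t)) / (r - t)) by (field; lra).
  unfold Rdiv. rewrite Rabs_mult, (Rabs_right (/ (r - t))) by (left; apply Rinv_0_lt_compat; lra).
  apply (Rmult_le_compat_r (/ (r - t))) in Key; [| left; apply Rinv_0_lt_compat; lra].
  rewrite Rmult_assoc, Rinv_r in Key by lra. lra.
Qed.

Lemma glue (f1 f2 : R -> R) r d : LL (fun t => (f1 t - f2 r) / (t - r)) r d -> is_derive f2 r d ->
  is_derive (fun t => if Rlt_dec t r then f1 t else f2 t) r d.
Proof.
  intros HL Hd. apply is_derive_Reals. apply is_derive_Reals in Hd.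
  intros eps He. destruct (HL eps He) as [d1 [H1 H1']]. destruct (Hd eps He) as [d2 Hd2].
  assert (Hp : 0 < Rmin d1 d2) by (apply Rmin_pos; [lra| apply cond_pos]).
  exists (mkposreal _ Hp). intros hh Hh0 Hh. simpl in Hh.
  assert (Rmin d1 d2 <= d1) by apply Rmin_l. assert (Rmin d1 d2 <= d2) by apply Rmin_r.
  destruct (Rlt_dec r r) as [h|h]; [lra|].
  destruct (Rlt_dec (r + hh) r) as [h1|h1].
  - apply Rabs_def2 in Hh. specialize (H1' (r + hh) ltac:(lra)).
    replace (r + hh - r) with hh in H1' by ring. exact H1'.
  - apply Hd2; auto. lra.
Qed.


Lemma deriv_H (V P Z : R -> R) C u : is_derive V u (Z u) -> is_derive P u (V u) ->
  is_derive (fun t => (V t + P t) * exp (- C * t)) u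
    ((Z u + V u - C * (V u + P u)) * exp (- C * u)).
Proof.
  intros HV HP.
  assert (HE : is_derive (fun t => exp (- C * t)) u (- C * exp (- C * u))) by (auto_derive; auto; ring).
  assert (HW : is_derive (fun t => V t + P t) u (Z u + V u)).
  { apply (is_derive_plus V P u (Z u) (V u) HV HP). }
  assert (G := is_derive_mult (fun t => V t + P t) (fun t => exp (- C * t)) u _ _ HW HE
     ltac:(intros; apply Rmult_comm)).
  unfold mult, plus in G; simpl in G.
  replace ((Z u + V u - C * (V u + P u)) * exp (- C * u)) with
    ((Z u + V u) * exp (- C * u) + (V u + P u) * (- C * exp (- C * u))) by ring.
  exact G.
Qed.

Lemma at_right_loc (Q : R -> Prop) r : 0 < r -> (forall y, 0 < y < r -> Q y) -> at_right 0 Q.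
Proof.
  intros hr H. exists (mkposreal r hr). intros y Hy Hpos. apply H. split; auto.
  change (Rabs (y - 0) < r) in Hy. rewrite Rminus_0_r in Hy. apply Rabs_def2 in Hy. lra.
Qed.

Lemma finite_impossible p al r phi dphi : Setup p al (Finite r) phi dphi ->
  is_max_sol p al (Finite r) phi dphi -> False.
Proof.
  intros HS [Hsol Hmax].
  destruct (setup_facts _ _ _ _ _ HS) as (HP0 & HV0 & HZ0 & HKp & Hc & Hder & Hcont & Hzd).
  assert (HS' := HS). destruct HS' as (hp & hal & _ & HK1 & HK2).
  assert (Hr : 0 < r) by (destruct Hsol as [H0 _]; simpl in H0; lra).
  assert (HVl : forall t, 0 <= t < r -> al / 2 <= Pf dphi t).
  { intros t Ht. apply (Vlow _ _ _ _ _ HS); simpl; lra. }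
  assert (HPl : forall t, 0 <= t < r -> 0 <= Pf phi t).
  { intros t Ht. destruct (Req_dec t 0) as [->|]. lra.
    assert (G := Ppos _ _ _ _ _ HS t ltac:(lra) ltac:(simpl; lra)). nra. }
  assert (Hd : forall t, 0 < t < r -> is_derive (Pf phi) t (Pf dphi t) /\
       is_derive (Pf dphi) t (Zf p (Pf phi) (Pf dphi) t)) by (intros t Ht; apply Hder; simpl; lra).
  assert (Hco : forall t, 0 <= t < r -> continuity_pt (Pf phi) t /\ continuity_pt (Pf dphi) t /\
       continuity_pt (Zf p (Pf phi) (Pf dphi)) t) by (intros t Ht; apply Hcont; simpl; lra).
  set (P := Pf phi) in *; set (V := Pf dphi) in *; set (Z := Zf p P V) in *.
  set (C := r / 2 + 1 + Rabs (gam p)).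
  assert (HC0 : 0 <= Rabs (gam p)) by apply Rabs_pos.
  set (Wm := al * exp (C * r)).
  assert (HW : forall t, 0 <= t < r -> V t + P t <= Wm).
  { intros t Ht.
    assert (G := mvt_ub (fun t => (V t + P t) * exp (- C * t))
      (fun u => (Z u + V u - C * (V u + P u)) * exp (- C * u)) 0 t 0 ltac:(lra)
      ltac:(intros y Hy; apply deriv_H; apply Hd; lra)).
    assert (G' : (V t + P t) * exp (- C * t) <= al).
    { simpl in G. rewrite HV0, HP0, Rmult_0_r, exp_0 in G.
      assert (Hb : forall x, 0 <= x <= t -> (Z x + V x - C * (V x + P x)) * exp (- C * x) <= 0).
      { intros x Hx. assert (0 < exp (- C * x)) by apply exp_pos.
        assert (Vx := HVl x ltac:(lra)). assert (Px := HPl x ltac:(lra)).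
        assert (Z x + V x - C * (V x + P x) <= 0).
        { unfold Z, Zf. assert (0 <= abspow (V x) p) by apply abspow_nonneg.
          assert (- gam p * P x <= Rabs (gam p) * P x).
          { assert (- gam p <= Rabs (gam p)) by (rewrite <- Rabs_Ropp; apply Rle_abs). nra. }
          assert (x / 2 * V x <= r / 2 * V x) by nra.
          unfold C. nra. }
        nra. }
      assert (Hcc : forall x, 0 <= x <= t -> continuity_pt (fun t => (V t + P t) * exp (- C * t)) x).
      { intros x Hx. apply continuity_pt_mult. apply continuity_pt_plus; apply Hco; lra.
        apply (derive_cont _ x (- C * exp (- C * x))). auto_derive; auto; ring. }
      specialize (G Hcc Hb). lra. }
    assert (0 < exp (- C * t)) by apply exp_pos.
    assert (exp (C * t) * exp (- C * t) = 1).
    { rewrite <- exp_plus. replace (C * t + - C * t) with 0 by ring. apply exp_0. }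
    assert (exp (C * t) <= exp (C * r)).
    { destruct (Req_dec t r); [subst; lra|]. left; apply exp_increasing. assert (0 < C) by (unfold C; lra). nra. }
    assert (V t + P t <= al * exp (C * t)).
    { assert (0 < exp (C * t)) by apply exp_pos. nra. }
    unfold Wm. nra. }
  assert (HVu : forall t, 0 <= t < r -> V t <= Wm) by (intros t Ht; specialize (HW t Ht); specialize (HPl t Ht); lra).
  assert (HPu : forall t, 0 <= t < r -> P t <= Wm) by (intros t Ht; specialize (HW t Ht); specialize (HVl t Ht); lra).
  assert (HWm : 0 < Wm) by (unfold Wm; assert (0 < exp (C * r)) by apply exp_pos; nra).
  set (M := Rabs (gam p) * Wm + Rpower Wm p).
  assert (HM0 : 0 <= M) by (unfold M; assert (0 < Rpower Wm p) by apply Rpower_pos; nra).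
  assert (HZl : forall t, 0 <= t < r -> - M <= Z t).
  { intros t Ht. unfold Z, Zf. assert (Vt := HVl t Ht). assert (Vt' := HVu t Ht).
    assert (Pt := HPl t Ht). assert (Pt' := HPu t Ht).
    rewrite abspow_pos by lra.
    assert (Rpower (V t) p <= Rpower Wm p) by (apply Rle_Rpower_l; lra).
    assert (- gam p * P t >= - (Rabs (gam p) * Wm)).
    { assert (gam p <= Rabs (gam p)) by apply Rle_abs. nra. }
    assert (0 <= / 2 * t * V t) by nra.
    unfold M. lra. }
  assert (HRh : 0 < r / 2 < r) by lra.
  destruct (LL_mono P r (r / 2) Wm ltac:(lra)) as [A HA].
  { intros t s Ht Hs. assert (G := mvt_lb P V t s 0 ltac:(lra)
      ltac:(intros y Hy; apply Hd; lra) ltac:(intros y Hy; apply Hco; lra)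
      ltac:(intros y Hy; assert (al / 2 <= V y) by (apply HVl; lra); lra)). lra. }
  { intros t Ht. apply HPu; lra. }
  set (Q := fun t => V t + M * t).
  destruct (LL_mono Q r (r / 2) (Wm + M * r) ltac:(lra)) as [B' HB'].
  { intros t s Ht Hs.
    assert (G := mvt_lb Q (fun u => Z u + M) t s 0 ltac:(lra)
      ltac:(intros y Hy; apply (is_derive_plus V (fun t => M * t) y (Z y) M);
            [apply Hd; lra| auto_derive; auto; ring])
      ltac:(intros y Hy; apply continuity_pt_plus; [apply Hco; lra|
               apply continuity_pt_mult; [apply continuity_pt_const; intros ? ?; auto| apply continuity_pt_id]])
      ltac:(intros y Hy; assert (- M <= Z y) by (apply HZl; lra); lra)). lra. }
  { intros t Ht. unfold Q. assert (V t <= Wm) by (apply HVu; lra). assert (M * t <= M * r) by nra. lra. }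
  set (B := B' - M * r).
  assert (HB : LL V r B).
  { apply (LL_ext (fun t => Q t - M * t) V r B 0 Hr). intros t Ht; unfold Q; ring.
    apply LL_minus; auto. apply (LL_mult (fun _ => M) (fun t => t)). apply LL_const. apply LL_id. }
  assert (HBp : al / 2 <= B) by (apply (LL_ge V r B 0 (al / 2) Hr HB); intros; apply HVl; lra).
  set (Zr := / 2 * r * B - gam p * A - abspow B p).
  assert (HZ : LL Z r Zr).
  { unfold Z, Zf, Zr. apply LL_minus. apply LL_minus.
    apply (LL_mult (fun t => / 2 * t) V). apply (LL_mult (fun _ => / 2) (fun t => t)). apply LL_const. apply LL_id. auto.
    apply (LL_mult (fun _ => gam p) P). apply LL_const. auto.
    apply (LL_comp V (fun u => abspow u p)); auto. apply abspow_cont. lra. }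
  assert (LLphi : LL phi r A) by (apply (LL_ext P phi r A 0 Hr); auto; intros t Ht; apply Pf_pos; lra).
  assert (LLdphi : LL dphi r B) by (apply (LL_ext V dphi r B 0 Hr); auto; intros t Ht; apply Pf_pos; lra).
  assert (LLode : LL (ode_rhs p phi dphi) r Zr)
    by (apply (LL_ext Z (ode_rhs p phi dphi) r Zr 0 Hr); auto; intros t Ht; apply Zf_pos; lra).
  destruct Hsol as (H0 & Hphi0 & Hdphi0 & Hrd1 & Hrd2 & Hdy).
  assert (Hdy' : forall t, 0 < t < r -> is_derive phi t (dphi t) /\ is_derive dphi t (ode_rhs p phi dphi t))
    by (intros t Ht; apply Hdy; simpl; lra).
  destruct (local_exist p r A B hp ltac:(lra)) as [rho [f [g [Hrho [Hf0 [Hg0 Hfg]]]]]].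
  set (psi := fun t => if Rlt_dec t r then phi t else f t).
  set (dpsi := fun t => if Rlt_dec t r then dphi t else g t).
  assert (Elt : forall t, t < r -> psi t = phi t /\ dpsi t = dphi t).
  { intros t Ht. unfold psi, dpsi. destruct Rlt_dec; [auto| lra]. }
  assert (Ege : forall t, r <= t -> psi t = f t /\ dpsi t = g t).
  { intros t Ht. unfold psi, dpsi. destruct Rlt_dec; [lra| auto]. }
  apply Hmax. exists (Finite (r + rho)), psi, dpsi.
  split; [simpl; lra|]. split.
  2: { intros y Hy HyR. simpl in HyR. apply Elt; auto. }
  destruct (Elt 0 Hr) as [E0 E1].
  split; [simpl; lra|]. split; [rewrite E0; auto|]. split; [rewrite E1; auto|].
  split.
  { unfold right_deriv. rewrite E1, E0.
    apply (filterlim_ext_loc (fun y => (phi y - phi 0) / (y - 0))); [|exact Hrd1].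
    apply at_right_loc with r; auto. intros y Hy. destruct (Elt y ltac:(lra)) as [Ey _]. rewrite Ey. auto. }
  split.
  { unfold right_deriv.
    assert (Eo : ode_rhs p psi dpsi 0 = ode_rhs p phi dphi 0) by (unfold ode_rhs; rewrite E0, E1; auto).
    rewrite Eo.
    apply (filterlim_ext_loc (fun y => (dphi y - dphi 0) / (y - 0))); [|exact Hrd2].
    apply at_right_loc with r; auto. intros y Hy. destruct (Elt y ltac:(lra)) as [_ Ey]. rewrite Ey, E1. auto. }
  intros y Hy HyR. simpl in HyR.
  destruct (Rtotal_order y r) as [h|[h|h]].
  - destruct (Hdy' y ltac:(lra)) as [D1 D2]. destruct (Elt y h) as [Ey1 Ey2].
    assert (Hloc : forall (u w : R -> R), (forall t, t < r -> u t = w t) -> locally y (fun t => w t = u t)).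
    { intros u w Huw. apply locally_R with (r - y); [lra|]. intros t Ht. apply Rabs_def2 in Ht.
      symmetry; apply Huw; lra. }
    rewrite Ey2. split.
    + apply (is_derive_ext_loc phi psi); auto. apply Hloc. intros t Ht; apply (proj1 (Elt t Ht)).
    + assert (Eo : ode_rhs p psi dpsi y = ode_rhs p phi dphi y) by (unfold ode_rhs; rewrite Ey1, Ey2; auto).
      rewrite Eo. apply (is_derive_ext_loc dphi dpsi); auto. apply Hloc. intros t Ht; apply (proj2 (Elt t Ht)).
  - subst y. destruct (Ege r ltac:(lra)) as [Er1 Er2].
    destruct (Hfg r ltac:(rewrite Rminus_eq_0, Rabs_R0; lra)) as [_ [D1 D2]].
    rewrite Hf0, Hg0 in D2. rewrite Hg0 in D1.
    split.
    + rewrite Er2, Hg0. apply glue; auto. rewrite Hf0.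
      apply (LDQ phi dphi 0 r A B Hr); auto. intros t Ht; apply Hdy'; lra.
    + assert (Eo : ode_rhs p psi dpsi r = Zr) by (unfold ode_rhs, Zr; rewrite Er1, Er2, Hf0, Hg0; auto).
      rewrite Eo. apply glue; auto. rewrite Hg0.
      apply (LDQ dphi (ode_rhs p phi dphi) 0 r B Zr Hr); auto. intros t Ht; apply Hdy'; lra.
  - destruct (Hfg y ltac:(rewrite Rabs_right; lra)) as [_ [D1 D2]].
    destruct (Ege y ltac:(lra)) as [Ey1 Ey2].
    assert (Hloc : forall (u w : R -> R), (forall t, r <= t -> u t = w t) -> locally y (fun t => w t = u t)).
    { intros u w Huw. apply locally_R with (y - r); [lra|]. intros t Ht. apply Rabs_def2 in Ht.
      symmetry; apply Huw; lra. }
    rewrite Ey2. split.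
    + apply (is_derive_ext_loc f psi); auto. apply Hloc. intros t Ht; apply (proj1 (Ege t Ht)).
    + assert (Eo : ode_rhs p psi dpsi y = / 2 * y * g y - gam p * f y - abspow (g y) p)
        by (unfold ode_rhs; rewrite Ey1, Ey2; auto).
      rewrite Eo. apply (is_derive_ext_loc g dpsi); auto. apply Hloc. intros t Ht; apply (proj2 (Ege t Ht)).
Qed.


Theorem proposition7p1 (p : R) (hp : 1 < p) :
  exists alpha0 : R, 0 < alpha0 /\
  forall (alpha : R), 0 < alpha -> alpha < alpha0 ->
  forall (Rm : Rbar) (phi dphi : R -> R),
    is_max_sol p alpha Rm phi dphi ->
    Rm = p_infty /\
    (forall y, 0 < y -> 0 < phi y /\ 0 < dphi y) /\
    (exists Rbar0 : R, 0 < Rbar0 /\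
       (forall y, 0 <= y -> y < Rbar0 -> ode_rhs p phi dphi y < 0) /\
       (forall y, Rbar0 < y -> 0 < ode_rhs p phi dphi y)).
Proof.
  set (c := / (2 * (p - 1))).
  assert (Hc : 0 < c) by (apply Rinv_0_lt_compat; lra).
  set (k0 := Rmin (/ 4) (c / 8)).
  assert (Hk0 : 0 < k0) by (apply Rmin_pos; lra).
  exists (Rpower k0 (/ (p - 1))). split; [apply Rpower_pos|].
  intros al Hal Hal0 Rm phi dphi Hmax.
  assert (HK : Rpower al (p - 1) < k0).
  { assert (Rpower al (p - 1) < Rpower (Rpower k0 (/ (p - 1))) (p - 1)) by (apply Rlt_Rpower_l; lra).
    rewrite Rpower_mult, Rinv_l, Rpower_1 in H by lra. exact H. }
  assert (HS : Setup p al Rm phi dphi).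
  { unfold Setup. split; [lra|]. split; [lra|]. split; [apply Hmax|]. split.
    - assert (k0 <= / 4) by apply Rmin_l. lra.
    - assert (k0 <= c / 8) by apply Rmin_r. fold c. lra. }
  assert (HRm : Rm = p_infty).
  { destruct Rm as [r| |]; auto.
    - exfalso. apply (finite_impossible p al r phi dphi HS Hmax).
    - exfalso. destruct Hmax as [[H0 _] _]. simpl in H0. exact H0. }
  subst Rm. split; auto. split.
  { intros y Hy. split.
    - assert (G := Ppos _ _ _ _ _ HS y Hy I). rewrite Pf_pos in G by lra. nra.
    - assert (G := Vlow _ _ _ _ _ HS y ltac:(lra) I). rewrite Pf_pos in G by lra. lra. }
  destruct (L_hit _ _ _ _ _ HS I) as [t0 Ht0].
  destruct (L_struct _ _ _ _ _ HS (ex_intro _ t0 Ht0)) as [Rb [Hb1 [_ [Hneg [_ Hpos]]]]].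
  exists Rb. split; [lra|]. split.
  - intros y Hy1 Hy2. rewrite <- Zf_pos by lra. apply Hneg; lra.
  - intros y Hy. rewrite <- Zf_pos by lra. apply (Hpos y Hy I).
Qed.
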